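(* Assume the setting below, on the A-mesh $S_{1/\varepsilon}$ (i.e. $\lambda=\varepsilon^{-1}$) with mesh parameter $a>3$. There exist $N_0$ and $C$, both independent of $\varepsilon$, such that for all $N\ge N_0$, \[ |\tau_i[y]|\le C\begin{cases} (\ln\varepsilon)^2N^{-2}, & 1\le i\le J-1,\\ \min\{\varepsilon,N^{-1}\}N^{-1}+\varepsilon^2N^{-1}, & i=J,\\ \min\{\varepsilon,N^{-1}\}N^{-1}, & J+1\le i\le N-1.\end{cases} \]
   Context: Let $0<\varepsilon<1$. Let $b,c,f\in C^4[0,1]$, and let $\beta$ be a constant with $b(x)>\beta>0$ and $c(x)\ge0$ on $[0,1]$. Let $u$ be the solution of $-\varepsilon u''-bu'+cu=f$ on $(0,1)$ with $u(0)=u(1)=0$. Let $u_0$ be the solution of $-bu_0'+cu_0=f$ on $(0,1)$ with $u_0(1)=0$. Set $w=u-u_0$, $v(x)=-\frac{\varepsilon u'(0)}{b(0)}e^{-b(0)x/\varepsilon}$ and $y=w-v$. Mesh $S_\lambda$, $\lambda\in\{N,\varepsilon^{-1}\}$. $N$ is a positive integer. $Q\in(0,1)$ is a fixed rational with $J=QN$ an integer, and $a>0$. Set $\xi=(a\varepsilon/\beta)\ln\lambda$, assumed $\le Q$, and $h=\xi/J$, $H=(1-\xi)/(N-J)$. The mesh points are $x_i=ih$ ($0\le i\le J$) and $x_i=\xi+(i-J)H$ ($J\le i\le N$). Write $h_i=x_i-x_{i-1}$ and $\hbar_i=(h_i+h_{i+1})/2$. Define $D^+g(x_i)=(g(x_{i+1})-g(x_i))/h_{i+1}$,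 $D^-g(x_i)=(g(x_i)-g(x_{i-1}))/h_i$, $D''g(x_i)=(D^+g(x_i)-D^-g(x_i))/\hbar_i$. Let $\sigma(\rho)=2\rho/(e^{2\rho}-1)$ for $\rho>0$, $\sigma(0)=1$, and $\rho_i=b(x_i)h_{i+1}/(2\varepsilon)$. The truncation error of the ASI scheme is $\tau_i[g]=-\varepsilon\sigma(\rho_i)D''g(x_i)-b(x_i)D^+g(x_i)+\varepsilon g''(x_i)+b(x_i)g'(x_i)$ for $1\le i\le N-1$. *)

(* Defs.v *)
From Stdlib Require Import Reals Lra.
From Coquelicot Require Import Coquelicot.
Open Scope R_scope.

Definition CkR (k : nat) (g : R -> R) : Prop :=
  (forall j x, (j <= k)%nat -> ex_derive_n g j x) /\
  (forall x, continuous (Derive_n g k) x).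

Definition xi_tr (a eps beta lam : R) : R := (a * eps / beta) * ln lam.

Definition mesh (xi : R) (N J : nat) (i : nat) : R :=
  if (i <=? J)%nat then INR i * (xi / INR J)
  else xi + INR (i - J) * ((1 - xi) / INR (N - J)).

(* h_i = x_i - x_{i-1} (used for i >= 1) *)
Definition hs (x : nat -> R) (i : nat) : R := x i - x (i - 1)%nat.
Definition hbar (x : nat -> R) (i : nat) : R := (hs x i + hs x (S i)) / 2.

Definition Dp (x : nat -> R) (g : R -> R) (i : nat) : R :=
  (g (x (S i)) - g (x i)) / hs x (S i).
Definition Dm (x : nat -> R) (g : R -> R) (i : nat) : R :=
  (g (x i) - g (x (i - 1)%nat)) / hs x i.
Definition D2 (x : nat -> R) (g : R -> R) (i : nat) : R :=
  (Dp x g i - Dm x g i) / hbar x i.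

Definition sigma (rho : R) : R :=
  if Rlt_dec 0 rho then 2 * rho / (exp (2 * rho) - 1) else 1.

Definition tau (eps : R) (b : R -> R) (x : nat -> R) (g : R -> R) (i : nat) : R :=
  let rho := b (x i) * hs x (S i) / (2 * eps) in
  - eps * sigma rho * D2 x g i - b (x i) * Dp x g i
  + eps * Derive_n g 2 (x i) + b (x i) * Derive g (x i).

(* Main.v *)
Require Import Defs.
From Stdlib Require Import Reals Lra Psatz Lia.
From Coquelicot Require Import Coquelicot.
Open Scope R_scope.

Lemma is_derive_cont f x l : is_derive f x l -> continuity_pt f x.
Proof.
  intro H. apply continuity_pt_filterlim.
  apply (ex_derive_continuous f x). exists l; exact H.
Qed.

Lemma mvt_open f df a b : a < b ->
  (forall x, a < x < b -> is_derive f x (df x)) ->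
  (forall x, a <= x <= b -> continuity_pt f x) ->
  exists c, a < c < b /\ f b - f a = df c * (b - a).
Proof.
  intros Hab Hd Hc.
  assert (pr1 : forall c, a < c < b -> derivable_pt f c).
  { intros c Pc. exists (df c). apply is_derive_Reals. apply Hd; exact Pc. }
  assert (pr2 : forall c, a < c < b -> derivable_pt id c).
  { intros c Pc. apply derivable_pt_id. }
  destruct (MVT f id a b pr1 pr2 Hab Hc) as [c [P HP]].
  { intros; apply derivable_continuous_pt; apply derivable_pt_id. }
  exists c; split; [exact P|].
  assert (E1 : derive_pt f c (pr1 c P) = df c).
  { apply derive_pt_eq_0. apply is_derive_Reals. apply Hd; exact P. }
  assert (E2 : derive_pt id c (pr2 c P) = 1).
  { apply derive_pt_eq_0. apply derivable_pt_lim_id. }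
  rewrite E1, E2 in HP. unfold id in HP. lra.
Qed.

Lemma mono_bound F dF G dG a b : a <= b ->
  (forall x, a < x < b -> is_derive F x (dF x)) ->
  (forall x, a < x < b -> is_derive G x (dG x)) ->
  (forall x, a <= x <= b -> continuity_pt F x) ->
  (forall x, a <= x <= b -> continuity_pt G x) ->
  (forall x, a < x < b -> Rabs (dF x) <= dG x) ->
  Rabs (F b - F a) <= G b - G a.
Proof.
  intros Hab HF HG cF cG Hb.
  destruct (Req_dec a b) as [E|Hne].
  { subst. replace (F b - F b) with 0 by ring. rewrite Rabs_R0. lra. }
  assert (Hlt : a < b) by lra.
  destruct (mvt_open (fun x => G x - F x) (fun x => dG x - dF x) a b Hlt) as [c1 [P1 E1]].
  { intros x Px. apply (is_derive_minus G F); auto. }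
  { intros x Px. apply continuity_pt_minus; auto. }
  destruct (mvt_open (fun x => G x + F x) (fun x => dG x + dF x) a b Hlt) as [c2 [P2 E2]].
  { intros x Px. apply (is_derive_plus G F); auto. }
  { intros x Px. apply continuity_pt_plus; auto. }
  specialize (Hb c1 P1) as B1. specialize (Hb c2 P2) as B2.
  apply Rabs_le_between in B1. apply Rabs_le_between in B2.
  apply Rabs_le. split; nra.
Qed.

Lemma deriv_sign q t l : is_derive q t l -> l <> 0 ->
  exists d, 0 < d /\ forall h, h <> 0 -> Rabs h < d ->
     0 < (q (t + h) - q t) / h * l.
Proof.
  intros H Hl. apply is_derive_Reals in H.
  assert (He : 0 < Rabs l / 2) by (apply Rabs_pos_lt in Hl; lra).
  destruct (H _ He) as [d Hd].
  exists d; split; [apply cond_pos|].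
  intros h Hh Hhd. specialize (Hd h Hh Hhd).
  apply Rabs_def2 in Hd. destruct Hd as [A B].
  destruct (Rlt_dec 0 l) as [Lp|Ln].
  - rewrite Rabs_pos_eq in A, B by lra. nra.
  - rewrite Rabs_left in A, B by lra. nra.
Qed.

Lemma deriv_neg_left q t l : is_derive q t l -> l < 0 ->
  exists d, 0 < d /\ forall s, t - d < s < t -> q t < q s.
Proof.
  intros H Hl. destruct (deriv_sign q t l H) as [d [Hd P]]; [lra|].
  exists d; split; auto. intros s Hs.
  specialize (P (s - t)). replace (t + (s - t)) with s in P by ring.
  assert (Q0 : 0 < (q s - q t) / (s - t) * l) by (apply P; [lra| rewrite Rabs_left; lra]).
  assert (Q1 : (q s - q t) / (s - t) < 0) by nra.
  unfold Rdiv in Q1.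
  assert (0 < / (s - t) * -1) by (assert (/ (s-t) < 0) by (apply Rinv_lt_0_compat; lra); lra).
  destruct (Rle_dec (q s) (q t)) as [Hle|]; [|lra].
  assert (0 <= (q s - q t) * / (s - t)).
  { replace ((q s - q t) * / (s - t)) with ((q t - q s) * (/ (s - t) * -1)) by ring.
    apply Rmult_le_pos; lra. }
  lra.
Qed.

Lemma deriv_neg_right q t l : is_derive q t l -> l < 0 ->
  exists d, 0 < d /\ forall s, t < s < t + d -> q s < q t.
Proof.
  intros H Hl. destruct (deriv_sign q t l H) as [d [Hd P]]; [lra|].
  exists d; split; auto. intros s Hs.
  specialize (P (s - t)). replace (t + (s - t)) with s in P by ring.
  assert (Q0 : 0 < (q s - q t) / (s - t) * l) by (apply P; [lra| rewrite Rabs_pos_eq; lra]).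
  assert (Q1 : (q s - q t) / (s - t) < 0) by nra.
  unfold Rdiv in Q1.
  assert (0 < / (s - t)) by (apply Rinv_0_lt_compat; lra).
  destruct (Rle_dec (q t) (q s)) as [Hle|]; [|lra].
  assert (0 <= (q s - q t) * / (s - t)) by (apply Rmult_le_pos; lra).
  lra.
Qed.

Lemma deriv_pos_left q t l : is_derive q t l -> 0 < l ->
  exists d, 0 < d /\ forall s, t - d < s < t -> q s < q t.
Proof.
  intros H Hl.
  destruct (deriv_neg_left (fun x => - q x) t (- l)) as [d [Hd P]].
  { apply (is_derive_opp q); exact H. } { lra. }
  exists d; split; auto. intros s Hs; specialize (P s Hs); lra.
Qed.

Lemma deriv_pos_right q t l : is_derive q t l -> 0 < l ->
  exists d, 0 < d /\ forall s, t < s < t + d -> q t < q s.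
Proof.
  intros H Hl.
  destruct (deriv_neg_right (fun x => - q x) t (- l)) as [d [Hd P]].
  { apply (is_derive_opp q); exact H. } { lra. }
  exists d; split; auto. intros s Hs; specialize (P s Hs); lra.
Qed.

Lemma max_princ eps (b c w w1 w2 : R -> R) : 0 < eps ->
  (forall x, 0 < x < 1 -> 0 <= c x) ->
  (forall x, 0 <= x <= 1 -> continuity_pt w x) ->
  (forall x, 0 < x < 1 -> is_derive w x (w1 x)) ->
  (forall x, 0 < x < 1 -> is_derive w1 x (w2 x)) ->
  (forall x, 0 < x < 1 -> 0 < - eps * w2 x - b x * w1 x + c x * w x) ->
  0 <= w 0 -> 0 <= w 1 -> forall x, 0 <= x <= 1 -> 0 <= w x.
Proof.
  intros He Hc Hcont Hd1 Hd2 HL H0 H1 x Hx.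
  destruct (continuity_ab_min w 0 1 ltac:(lra) Hcont) as [m [Hm Pm]].
  destruct (Rle_dec 0 (w x)) as [|Hneg]; [auto|exfalso].
  assert (wm : w m < 0) by (specialize (Hm x Hx); lra).
  assert (Im : 0 < m < 1).
  { split; destruct (Req_dec m 0); destruct (Req_dec m 1); subst; lra. }
  assert (E1 : w1 m = 0).
  { destruct (Rtotal_order (w1 m) 0) as [Hl|[Hl|Hl]]; auto.
    - destruct (deriv_neg_right w m _ (Hd1 m Im) Hl) as [d [Hd P]].
      set (s := m + Rmin d (1 - m) / 2).
      assert (m < s < m + d) by (unfold s; pose proof (Rmin_l d (1-m)); pose proof (Rmin_r d (1-m));
        assert (0 < Rmin d (1-m)) by (apply Rmin_pos; lra); lra).
      specialize (P s H). specialize (Hm s). unfold s in *.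
      pose proof (Rmin_r d (1-m)). pose proof (Rmin_l d (1-m)).
      assert (0 < Rmin d (1-m)) by (apply Rmin_pos; lra).
      specialize (Hm ltac:(lra)). lra.
    - destruct (deriv_pos_left w m _ (Hd1 m Im) Hl) as [d [Hd P]].
      pose proof (Rmin_r d m). pose proof (Rmin_l d m).
      assert (0 < Rmin d m) by (apply Rmin_pos; lra).
      specialize (P (m - Rmin d m / 2) ltac:(lra)). specialize (Hm (m - Rmin d m / 2) ltac:(lra)). lra. }
  assert (E2 : 0 <= w2 m).
  { destruct (Rle_dec 0 (w2 m)) as [|Hl]; auto. exfalso.
    destruct (deriv_neg_left w1 m _ (Hd2 m Im) ltac:(lra)) as [d [Hd P]].
    pose proof (Rmin_r d m). pose proof (Rmin_l d m).
    assert (0 < Rmin d m) by (apply Rmin_pos; lra).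
    set (s := m - Rmin d m / 2).
    destruct (mvt_open w w1 s m ltac:(unfold s; lra)) as [c0 [Pc Ec]].
    { intros y Hy. apply Hd1. unfold s in Hy; lra. }
    { intros y Hy. apply Hcont. unfold s in Hy; lra. }
    assert (0 < w1 c0) by (rewrite <- E1; apply P; unfold s in Pc; lra).
    specialize (Hm s ltac:(unfold s; lra)).
    assert (0 < w1 c0 * (m - s)) by (apply Rmult_lt_0_compat; lra). lra. }
  specialize (HL m Im). rewrite E1 in HL. specialize (Hc m Im).
  assert (0 <= eps * w2 m) by (apply Rmult_le_pos; lra).
  assert (c m * w m <= 0) by nra.
  lra.
Qed.

Lemma fc_fwd (q dq : R -> R) x0 x1 : x0 <= x1 ->
  (forall t, x0 <= t <= x1 -> continuity_pt q t) ->
  (forall t, x0 < t <= x1 -> is_derive q t (dq t)) ->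
  q x0 <= 0 ->
  (forall t, x0 < t <= x1 -> 0 < q t -> dq t < 0) ->
  q x1 <= 0.
Proof.
  intros Hx Hc Hd H0 Hs.
  destruct (continuity_ab_maj q x0 x1 Hx Hc) as [m [Hm Pm]].
  destruct (Rle_dec (q x1) 0) as [|Hp]; [auto|exfalso].
  assert (qm : 0 < q m) by (specialize (Hm x1 ltac:(lra)); lra).
  assert (Im : x0 < m <= x1) by (destruct (Req_dec m x0); subst; lra).
  destruct (deriv_neg_left q m _ (Hd m Im) (Hs m Im qm)) as [d [Hd0 P]].
  pose proof (Rmin_r d (m - x0)). pose proof (Rmin_l d (m - x0)).
  assert (0 < Rmin d (m - x0)) by (apply Rmin_pos; lra).
  specialize (P (m - Rmin d (m - x0) / 2) ltac:(lra)).
  specialize (Hm (m - Rmin d (m - x0) / 2) ltac:(lra)). lra.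
Qed.

Lemma fc_bwd (q dq : R -> R) x0 x1 : x0 <= x1 ->
  (forall t, x0 <= t <= x1 -> continuity_pt q t) ->
  (forall t, x0 <= t < x1 -> is_derive q t (dq t)) ->
  q x1 <= 0 ->
  (forall t, x0 <= t < x1 -> 0 < q t -> 0 < dq t) ->
  q x0 <= 0.
Proof.
  intros Hx Hc Hd H0 Hs.
  destruct (continuity_ab_maj q x0 x1 Hx Hc) as [m [Hm Pm]].
  destruct (Rle_dec (q x0) 0) as [|Hp]; [auto|exfalso].
  assert (qm : 0 < q m) by (specialize (Hm x0 ltac:(lra)); lra).
  assert (Im : x0 <= m < x1) by (destruct (Req_dec m x1); subst; lra).
  destruct (deriv_pos_right q m _ (Hd m Im) (Hs m Im qm)) as [d [Hd0 P]].
  pose proof (Rmin_r d (x1 - m)). pose proof (Rmin_l d (x1 - m)).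
  assert (0 < Rmin d (x1 - m)) by (apply Rmin_pos; lra).
  specialize (P (m + Rmin d (x1 - m) / 2) ltac:(lra)).
  specialize (Hm (m + Rmin d (x1 - m) / 2) ltac:(lra)). lra.
Qed.

Lemma cont_ext0 (q : R -> R) : continuity_pt q 0 ->
  (forall x, 0 < x < 1 -> q x <= 0) -> q 0 <= 0.
Proof.
  intros Hc H. destruct (Rle_dec (q 0) 0) as [|Hp]; [auto|exfalso].
  destruct (Hc (q 0 / 2) ltac:(lra)) as [al [Hal P]].
  set (x := Rmin al 1 / 2).
  assert (0 < Rmin al 1) by (apply Rmin_pos; lra).
  pose proof (Rmin_r al 1). pose proof (Rmin_l al 1).
  specialize (P x). simpl in P. unfold R_dist, D_x, no_cond in P.
  assert (A : Rabs (q x - q 0) < q 0 / 2).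
  { apply P. split. split; [auto| unfold x; lra]. unfold x. rewrite Rminus_0_r, Rabs_pos_eq; lra. }
  specialize (H x ltac:(unfold x; lra)). apply Rabs_def2 in A. lra.
Qed.

Lemma cont_eq0 (p q : R -> R) : continuity_pt p 0 -> continuity_pt q 0 ->
  (forall x, 0 < x < 1 -> p x = q x) -> p 0 = q 0.
Proof.
  intros Hp Hq H.
  assert (A : (fun x => p x - q x) 0 <= 0).
  { apply (cont_ext0 (fun x => p x - q x)). apply continuity_pt_minus; auto. intros x Hx; simpl; rewrite H; auto; lra. }
  assert (B : (fun x => q x - p x) 0 <= 0).
  { apply (cont_ext0 (fun x => q x - p x)). apply continuity_pt_minus; auto. intros x Hx; simpl; rewrite H; auto; lra. }
  simpl in A, B. lra.
Qed.

Ltac rwD := repeat match goal with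
 | H : is_derive ?g ?s ?l |- context [Derive ?f ?s] =>
     rewrite (is_derive_unique f s l H)
 end.
Ltac exD := repeat match goal with
 | |- _ /\ _ => split
 | |- True => exact I
 | H : is_derive ?g ?s ?l |- ex_derive (fun t => ?g t) ?s => exists l; exact H
 | H : is_derive ?g ?s ?l |- ex_derive ?g ?s => exists l; exact H
 end.
Ltac autoD := auto_derive; [exD | rwD].

Lemma T1 (g g1 : R -> R) x t M : 0 < t ->
  (forall s, x <= s < x + t -> is_derive g s (g1 s)) ->
  continuity_pt g (x + t) ->
  (forall s, x < s < x + t -> Rabs (g1 s) <= M) ->
  Rabs (g (x + t) - g x) <= M * t.
Proof.
  intros Ht Hd Hc HM.
  replace (M * t) with (M * (x + t) - M * x) by ring.
  apply (mono_bound g g1 (fun s => M * s) (fun _ => M)); try lra.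
  - intros; apply Hd; lra.
  - intros s Hs. autoD. ring.
  - intros s Hs. destruct (Req_dec s (x + t)) as [E|E]; [subst; auto|].
    apply (is_derive_cont _ _ (g1 s)); apply Hd; lra.
  - intros; apply continuity_pt_mult; [apply continuity_pt_const; intros ??; auto|apply continuity_pt_id].
  - auto.
Qed.

Lemma T2 (g g1 g2 : R -> R) x t M : 0 < t ->
  (forall s, x <= s < x + t -> is_derive g s (g1 s)) ->
  (forall s, x <= s < x + t -> is_derive g1 s (g2 s)) ->
  continuity_pt g (x + t) ->
  (forall s, x < s < x + t -> Rabs (g2 s) <= M) ->
  Rabs (g (x + t) - g x - t * g1 x) <= M * t ^ 2 / 2.
Proof.
  intros Ht Hd1 Hd2 Hc HM.
  assert (L1 : forall s, x < s < x + t -> Rabs (g1 s - g1 x) <= M * (s - x)).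
  { intros s Hs. replace s with (x + (s - x)) at 1 by ring.
    apply (T1 g1 g2); try lra.
    - intros; apply Hd2; lra.
    - replace (x + (s - x)) with s by ring. apply (is_derive_cont _ _ (g2 s)); apply Hd2; lra.
    - intros; apply HM; lra. }
  replace (g (x + t) - g x - t * g1 x) with
    ((fun s => g s - s * g1 x) (x + t) - (fun s => g s - s * g1 x) x) by (simpl; ring).
  replace (M * t ^ 2 / 2) with ((fun s => M * (s - x) ^ 2 / 2) (x + t) - (fun s => M * (s - x) ^ 2 / 2) x) by (simpl; field).
  apply (mono_bound (fun s => g s - s * g1 x) (fun s => g1 s - g1 x) (fun s => M * (s - x) ^ 2 / 2) (fun s => M * (s - x))); try lra.
  - intros s Hs. specialize (Hd1 s ltac:(lra)). autoD. ring.
  - intros s Hs. autoD. field.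
  - intros s Hs. apply continuity_pt_minus.
    + destruct (Req_dec s (x + t)) as [E|E]; [subst; auto|].
      apply (is_derive_cont _ _ (g1 s)); apply Hd1; lra.
    + apply continuity_pt_mult; [apply continuity_pt_id|apply continuity_pt_const; intros ??; auto].
  - intros s Hs. apply (is_derive_cont _ _ (M * (s - x))). autoD. field.
  - intros s Hs. apply L1; auto.
Qed.

Lemma T3 (g g1 g2 g3 : R -> R) x t M : 0 < t ->
  (forall s, x <= s < x + t -> is_derive g s (g1 s)) ->
  (forall s, x <= s < x + t -> is_derive g1 s (g2 s)) ->
  (forall s, x <= s < x + t -> is_derive g2 s (g3 s)) ->
  continuity_pt g (x + t) ->
  (forall s, x < s < x + t -> Rabs (g3 s) <= M) ->
  Rabs (g (x + t) - g x - t * g1 x - t ^ 2 / 2 * g2 x) <= M * t ^ 3 / 6.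
Proof.
  intros Ht Hd1 Hd2 Hd3 Hc HM.
  assert (L1 : forall s, x < s < x + t -> Rabs (g1 s - g1 x - (s - x) * g2 x) <= M * (s - x) ^ 2 / 2).
  { intros s Hs. replace s with (x + (s - x)) at 1 by ring.
    apply (T2 g1 g2 g3); try lra.
    - intros; apply Hd2; lra.
    - intros; apply Hd3; lra.
    - replace (x + (s - x)) with s by ring. apply (is_derive_cont _ _ (g2 s)); apply Hd2; lra.
    - intros; apply HM; lra. }
  replace (g (x + t) - g x - t * g1 x - t ^ 2 / 2 * g2 x) with
    ((fun s => g s - s * g1 x - (s - x) ^ 2 / 2 * g2 x) (x + t) - (fun s => g s - s * g1 x - (s - x) ^ 2 / 2 * g2 x) x) by (simpl; field).
  replace (M * t ^ 3 / 6) with ((fun s => M * (s - x) ^ 3 / 6) (x + t) - (fun s => M * (s - x) ^ 3 / 6) x) by (simpl; field).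
  apply (mono_bound (fun s => g s - s * g1 x - (s - x) ^ 2 / 2 * g2 x) (fun s => g1 s - g1 x - (s - x) * g2 x) (fun s => M * (s - x) ^ 3 / 6) (fun s => M * (s - x) ^ 2 / 2)); try lra.
  - intros s Hs. specialize (Hd1 s ltac:(lra)). autoD. field.
  - intros s Hs. autoD. field.
  - intros s Hs. apply (continuity_pt_minus (fun s => g s - s * g1 x)).
    + apply continuity_pt_minus.
      * destruct (Req_dec s (x + t)) as [E|E]; [subst; auto|].
        apply (is_derive_cont _ _ (g1 s)); apply Hd1; lra.
      * apply continuity_pt_mult; [apply continuity_pt_id|apply continuity_pt_const; intros ??; auto].
    + apply (is_derive_cont _ _ ((s - x) * g2 x)). autoD. field.
  - intros s Hs. apply (is_derive_cont _ _ (M * (s - x) ^ 2 / 2)). autoD. field.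
  - intros s Hs. apply L1; auto.
Qed.

Lemma T4 (g g1 g2 g3 g4 : R -> R) x t M : 0 < t ->
  (forall s, x <= s < x + t -> is_derive g s (g1 s)) ->
  (forall s, x <= s < x + t -> is_derive g1 s (g2 s)) ->
  (forall s, x <= s < x + t -> is_derive g2 s (g3 s)) ->
  (forall s, x <= s < x + t -> is_derive g3 s (g4 s)) ->
  continuity_pt g (x + t) ->
  (forall s, x < s < x + t -> Rabs (g4 s) <= M) ->
  Rabs (g (x + t) - g x - t * g1 x - t ^ 2 / 2 * g2 x - t ^ 3 / 6 * g3 x) <= M * t ^ 4 / 24.
Proof.
  intros Ht Hd1 Hd2 Hd3 Hd4 Hc HM.
  assert (L1 : forall s, x < s < x + t -> Rabs (g1 s - g1 x - (s - x) * g2 x - (s - x) ^ 2 / 2 * g3 x) <= M * (s - x) ^ 3 / 6).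
  { intros s Hs. replace s with (x + (s - x)) at 1 by ring.
    apply (T3 g1 g2 g3 g4); try lra.
    - intros; apply Hd2; lra.
    - intros; apply Hd3; lra.
    - intros; apply Hd4; lra.
    - replace (x + (s - x)) with s by ring. apply (is_derive_cont _ _ (g2 s)); apply Hd2; lra.
    - intros; apply HM; lra. }
  replace (g (x + t) - g x - t * g1 x - t ^ 2 / 2 * g2 x - t ^ 3 / 6 * g3 x) with
    ((fun s => g s - s * g1 x - (s - x) ^ 2 / 2 * g2 x - (s - x) ^ 3 / 6 * g3 x) (x + t) - (fun s => g s - s * g1 x - (s - x) ^ 2 / 2 * g2 x - (s - x) ^ 3 / 6 * g3 x) x) by (simpl; field).
  replace (M * t ^ 4 / 24) with ((fun s => M * (s - x) ^ 4 / 24) (x + t) - (fun s => M * (s - x) ^ 4 / 24) x) by (simpl; field).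
  apply (mono_bound (fun s => g s - s * g1 x - (s - x) ^ 2 / 2 * g2 x - (s - x) ^ 3 / 6 * g3 x) (fun s => g1 s - g1 x - (s - x) * g2 x - (s - x) ^ 2 / 2 * g3 x) (fun s => M * (s - x) ^ 4 / 24) (fun s => M * (s - x) ^ 3 / 6)); try lra.
  - intros s Hs. specialize (Hd1 s ltac:(lra)). autoD. field.
  - intros s Hs. autoD. field.
  - intros s Hs. apply (continuity_pt_minus (fun s => g s - s * g1 x - (s - x) ^ 2 / 2 * g2 x)).
    + apply (continuity_pt_minus (fun s => g s - s * g1 x)).
      * apply continuity_pt_minus.
        -- destruct (Req_dec s (x + t)) as [E|E]; [subst; auto|].
           apply (is_derive_cont _ _ (g1 s)); apply Hd1; lra.
        -- apply continuity_pt_mult; [apply continuity_pt_id|apply continuity_pt_const; intros ??; auto].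
      * apply (is_derive_cont _ _ ((s - x) * g2 x)). autoD. field.
    + apply (is_derive_cont _ _ ((s - x) ^ 2 / 2 * g3 x)). autoD. field.
  - intros s Hs. apply (is_derive_cont _ _ (M * (s - x) ^ 3 / 6)). autoD. field.
  - intros s Hs. apply L1; auto.
Qed.

Lemma refl_der (g g1 : R -> R) s : is_derive g (- s) (g1 (- s)) ->
  is_derive (fun z => g (- z)) s (- g1 (- s)).
Proof.
  intro H. auto_derive. exists (g1 (-s)); exact H.
  rwD. ring.
Qed.

Lemma refl_cont (g : R -> R) s : continuity_pt g (- s) -> continuity_pt (fun z => g (- z)) s.
Proof.
  intro H. apply (continuity_pt_comp Ropp g). apply continuity_pt_opp, continuity_pt_id. exact H.
Qed.

Lemma T2b (g g1 g2 : R -> R) x t M : 0 < t ->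
  (forall s, x - t < s <= x -> is_derive g s (g1 s)) ->
  (forall s, x - t < s <= x -> is_derive g1 s (g2 s)) ->
  continuity_pt g (x - t) ->
  (forall s, x - t < s < x -> Rabs (g2 s) <= M) ->
  Rabs (g (x - t) - g x + t * g1 x) <= M * t ^ 2 / 2.
Proof.
  intros Ht Hd1 Hd2 Hc HM.
  pose proof (T2 (fun z => g (- z)) (fun z => - g1 (- z)) (fun z => g2 (- z)) (- x) t M Ht) as T.
  replace (- x + t) with (- (x - t)) in T by ring. rewrite !Ropp_involutive in T.
  replace (g (x - t) - g x + t * g1 x) with (g (x - t) - g x - t * - g1 x) by ring.
  apply T.
  - intros s Hs. apply refl_der. apply Hd1; lra.
  - intros s Hs. replace (g2 (- s)) with (- - g2 (- s)) by ring.
    apply (is_derive_opp (fun z => g1 (- z))). apply refl_der. apply Hd2; lra.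
  - apply refl_cont. rewrite Ropp_involutive; exact Hc.
  - intros s Hs. apply HM; lra.
Qed.

Lemma T3b (g g1 g2 g3 : R -> R) x t M : 0 < t ->
  (forall s, x - t < s <= x -> is_derive g s (g1 s)) ->
  (forall s, x - t < s <= x -> is_derive g1 s (g2 s)) ->
  (forall s, x - t < s <= x -> is_derive g2 s (g3 s)) ->
  continuity_pt g (x - t) ->
  (forall s, x - t < s < x -> Rabs (g3 s) <= M) ->
  Rabs (g (x - t) - g x + t * g1 x - t ^ 2 / 2 * g2 x) <= M * t ^ 3 / 6.
Proof.
  intros Ht Hd1 Hd2 Hd3 Hc HM.
  pose proof (T3 (fun z => g (- z)) (fun z => - g1 (- z)) (fun z => g2 (- z)) (fun z => - g3 (- z)) (- x) t M Ht) as T.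
  replace (- x + t) with (- (x - t)) in T by ring. rewrite !Ropp_involutive in T.
  replace (g (x - t) - g x + t * g1 x - t ^ 2 / 2 * g2 x) with (g (x - t) - g x - t * - g1 x - t ^ 2 / 2 * g2 x) by ring.
  apply T.
  - intros s Hs. apply refl_der. apply Hd1; lra.
  - intros s Hs. replace (g2 (- s)) with (- - g2 (- s)) by ring.
    apply (is_derive_opp (fun z => g1 (- z))). apply refl_der. apply Hd2; lra.
  - intros s Hs. apply refl_der. apply Hd3; lra.
  - apply refl_cont. rewrite Ropp_involutive; exact Hc.
  - intros s Hs. rewrite Rabs_Ropp. apply HM; lra.
Qed.

Lemma T4b (g g1 g2 g3 g4 : R -> R) x t M : 0 < t ->
  (forall s, x - t < s <= x -> is_derive g s (g1 s)) ->
  (forall s, x - t < s <= x -> is_derive g1 s (g2 s)) ->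
  (forall s, x - t < s <= x -> is_derive g2 s (g3 s)) ->
  (forall s, x - t < s <= x -> is_derive g3 s (g4 s)) ->
  continuity_pt g (x - t) ->
  (forall s, x - t < s < x -> Rabs (g4 s) <= M) ->
  Rabs (g (x - t) - g x + t * g1 x - t ^ 2 / 2 * g2 x + t ^ 3 / 6 * g3 x) <= M * t ^ 4 / 24.
Proof.
  intros Ht Hd1 Hd2 Hd3 Hd4 Hc HM.
  pose proof (T4 (fun z => g (- z)) (fun z => - g1 (- z)) (fun z => g2 (- z)) (fun z => - g3 (- z)) (fun z => g4 (- z)) (- x) t M Ht) as T.
  replace (- x + t) with (- (x - t)) in T by ring. rewrite !Ropp_involutive in T.
  replace (g (x - t) - g x + t * g1 x - t ^ 2 / 2 * g2 x + t ^ 3 / 6 * g3 x) with (g (x - t) - g x - t * - g1 x - t ^ 2 / 2 * g2 x - t ^ 3 / 6 * - g3 x) by ring.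
  apply T.
  - intros s Hs. apply refl_der. apply Hd1; lra.
  - intros s Hs. replace (g2 (- s)) with (- - g2 (- s)) by ring.
    apply (is_derive_opp (fun z => g1 (- z))). apply refl_der. apply Hd2; lra.
  - intros s Hs. apply refl_der. apply Hd3; lra.
  - intros s Hs. replace (g4 (- s)) with (- - g4 (- s)) by ring.
    apply (is_derive_opp (fun z => g3 (- z))). apply refl_der. apply Hd4; lra.
  - apply refl_cont. rewrite Ropp_involutive; exact Hc.
  - intros s Hs. apply HM; lra.
Qed.

Lemma abs_div_le a d K : 0 < d -> Rabs a <= K * d -> Rabs (a / d) <= K.
Proof.
  intros Hd H. unfold Rdiv. rewrite Rabs_mult, Rabs_inv, (Rabs_pos_eq d) by lra.
  apply (Rmult_le_reg_r d); [lra|]. rewrite Rmult_assoc, Rinv_l by lra. lra.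
Qed.

Lemma abs_mul_le a b A B : Rabs a <= A -> Rabs b <= B -> Rabs (a * b) <= A * B.
Proof.
  intros H1 H2. rewrite Rabs_mult. apply Rmult_le_compat; auto; apply Rabs_pos.
Qed.

Lemma abs3 a b c : Rabs (a + b + c) <= Rabs a + Rabs b + Rabs c.
Proof.
  eapply Rle_trans; [apply Rabs_triang|]. pose proof (Rabs_triang a b). lra.
Qed.

Definition tloc (eps s bi : R) (y y1 y2 : R -> R) (x hl hr : R) : R :=
  - eps * s * (((y (x + hr) - y x) / hr - (y x - y (x - hl)) / hl) / ((hl + hr) / 2))
  - bi * ((y (x + hr) - y x) / hr) + eps * y2 x + bi * y1 x.

Section Loc.
Variables (eps s bi : R) (y y1 y2 y3 y4 : R -> R) (x hl hr : R).
Hypotheses (He : 0 < eps) (Hs : 0 <= s <= 1) (Hb : 0 <= bi) (Hl : 0 < hl) (Hr : 0 < hr).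
Hypotheses (Dy1 : forall z, x - hl < z < x + hr -> is_derive y z (y1 z))
           (Dy2 : forall z, x - hl < z < x + hr -> is_derive y1 z (y2 z))
           (Cl : continuity_pt y (x - hl)) (Cr : continuity_pt y (x + hr)).

Lemma loc_crude M2 : (forall z, x - hl < z < x + hr -> Rabs (y2 z) <= M2) ->
  Rabs (tloc eps s bi y y1 y2 x hl hr) <= 2 * eps * M2 + bi * hr * M2 / 2.
Proof.
  intros HM.
  assert (A := T2 y y1 y2 x hr M2 Hr ltac:(intros; apply Dy1; lra) ltac:(intros; apply Dy2; lra) Cr ltac:(intros; apply HM; lra)).
  assert (B := T2b y y1 y2 x hl M2 Hl ltac:(intros; apply Dy1; lra) ltac:(intros; apply Dy2; lra) Cl ltac:(intros; apply HM; lra)).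
  assert (M0 : Rabs (y2 x) <= M2) by (apply HM; lra).
  set (ep := y (x + hr) - y x - hr * y1 x) in A.
  set (em := y (x - hl) - y x + hl * y1 x) in B.
  assert (BP : Rabs (ep / hr) <= M2 * hr / 2) by (apply abs_div_le; [lra| nra]).
  assert (BM : Rabs (em / hl) <= M2 * hl / 2) by (apply abs_div_le; [lra| nra]).
  assert (BD : Rabs ((ep / hr + em / hl) / ((hl + hr) / 2)) <= M2).
  { apply abs_div_le; [lra|]. eapply Rle_trans; [apply Rabs_triang|]. lra. }
  assert (E : tloc eps s bi y y1 y2 x hl hr = - (eps * s) * ((ep / hr + em / hl) / ((hl + hr) / 2)) + (- bi) * (ep / hr) + eps * y2 x).
  { unfold tloc, ep, em. field. lra. }
  rewrite E. eapply Rle_trans; [apply abs3|].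
  assert (Rabs (- (eps * s) * ((ep / hr + em / hl) / ((hl + hr) / 2))) <= eps * M2).
  { replace (eps * M2) with (eps * 1 * M2) by ring. apply abs_mul_le; auto.
    rewrite Rabs_Ropp, Rabs_mult, !Rabs_pos_eq by lra. nra. }
  assert (Rabs (- bi * (ep / hr)) <= bi * (M2 * hr / 2)).
  { apply abs_mul_le; auto. rewrite Rabs_Ropp, Rabs_pos_eq; lra. }
  assert (Rabs (eps * y2 x) <= eps * M2) by (apply abs_mul_le; auto; rewrite Rabs_pos_eq; lra).
  lra.
Qed.

Lemma loc_ref M3 rho : (forall z, x - hl < z < x + hr -> is_derive y2 z (y3 z)) ->
  (forall z, x - hl < z < x + hr -> Rabs (y3 z) <= M3) ->
  eps * rho = bi * hr / 2 -> Rabs (1 - s - rho) <= 4 * rho ^ 2 ->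
  Rabs (tloc eps s bi y y1 y2 x hl hr) <=
    eps * (4 * rho ^ 2) * Rabs (y2 x) + eps * s * (M3 / 3 * (hl + hr)) + bi * (M3 * hr ^ 2 / 6).
Proof.
  intros Dy3 HM Hrho Hsig.
  assert (A := T3 y y1 y2 y3 x hr M3 Hr ltac:(intros; apply Dy1; lra) ltac:(intros; apply Dy2; lra) ltac:(intros; apply Dy3; lra) Cr ltac:(intros; apply HM; lra)).
  assert (B := T3b y y1 y2 y3 x hl M3 Hl ltac:(intros; apply Dy1; lra) ltac:(intros; apply Dy2; lra) ltac:(intros; apply Dy3; lra) Cl ltac:(intros; apply HM; lra)).
  set (ep := y (x + hr) - y x - hr * y1 x - hr ^ 2 / 2 * y2 x) in A.
  set (em := y (x - hl) - y x + hl * y1 x - hl ^ 2 / 2 * y2 x) in B.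
  assert (BP : Rabs (ep / hr) <= M3 * hr ^ 2 / 6) by (apply abs_div_le; [lra| nra]).
  assert (BM : Rabs (em / hl) <= M3 * hl ^ 2 / 6) by (apply abs_div_le; [lra| nra]).
  assert (M3p : 0 <= M3) by (specialize (HM x ltac:(lra)); pose proof (Rabs_pos (y3 x)); lra).
  assert (BD : Rabs ((ep / hr + em / hl) / ((hl + hr) / 2)) <= M3 / 3 * (hl + hr)).
  { apply abs_div_le; [lra|]. eapply Rle_trans; [apply Rabs_triang|].
    assert (M3 * (hr^2 + hl^2) <= M3 * (hl+hr)^2) by (apply Rmult_le_compat_l; nra). lra. }
  assert (E : tloc eps s bi y y1 y2 x hl hr = (eps * (1 - s - rho)) * y2 x + (- (eps * s)) * ((ep / hr + em / hl) / ((hl + hr) / 2)) + (- bi) * (ep / hr)).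
  { unfold tloc, ep, em. apply (Rmult_eq_reg_l 2); [|lra].
    replace (2 * ((eps * (1 - s - rho)) * y2 x + (- (eps * s)) * ((((y (x + hr) - y x - hr * y1 x - hr ^ 2 / 2 * y2 x) / hr + (y (x - hl) - y x + hl * y1 x - hl ^ 2 / 2 * y2 x) / hl) / ((hl + hr) / 2))) + (- bi) * ((y (x + hr) - y x - hr * y1 x - hr ^ 2 / 2 * y2 x) / hr)))
      with (2 * eps * (1 - s) * y2 x - 2 * (eps * rho) * y2 x + (- (eps * s)) * 2 * ((((y (x + hr) - y x - hr * y1 x - hr ^ 2 / 2 * y2 x) / hr + (y (x - hl) - y x + hl * y1 x - hl ^ 2 / 2 * y2 x) / hl) / ((hl + hr) / 2))) + 2 * (- bi) * ((y (x + hr) - y x - hr * y1 x - hr ^ 2 / 2 * y2 x) / hr)) by ring.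
    rewrite Hrho. field. lra. }
  rewrite E. eapply Rle_trans; [apply abs3|].
  assert (Rabs (eps * (1 - s - rho) * y2 x) <= eps * (4 * rho ^ 2) * Rabs (y2 x)).
  { rewrite !Rabs_mult, (Rabs_pos_eq eps) by lra. apply Rmult_le_compat_r; [apply Rabs_pos|].
    apply Rmult_le_compat_l; lra. }
  assert (Rabs (- (eps * s) * ((ep / hr + em / hl) / ((hl + hr) / 2))) <= eps * s * (M3 / 3 * (hl + hr))).
  { apply abs_mul_le; auto. rewrite Rabs_Ropp, Rabs_mult, !Rabs_pos_eq by lra. lra. }
  assert (Rabs (- bi * (ep / hr)) <= bi * (M3 * hr ^ 2 / 6)).
  { apply abs_mul_le; auto. rewrite Rabs_Ropp, Rabs_pos_eq; lra. }
  lra.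
Qed.

Lemma loc_unif M3 M4 rho : hl = hr ->
  (forall z, x - hl < z < x + hr -> is_derive y2 z (y3 z)) ->
  (forall z, x - hl < z < x + hr -> is_derive y3 z (y4 z)) ->
  (forall z, x - hl < z < x + hr -> Rabs (y3 z) <= M3) ->
  (forall z, x - hl < z < x + hr -> Rabs (y4 z) <= M4) ->
  eps * rho = bi * hr / 2 -> Rabs (1 - s - rho) <= 4 * rho ^ 2 ->
  Rabs (tloc eps s bi y y1 y2 x hl hr) <=
    eps * (4 * rho ^ 2) * Rabs (y2 x) + eps * s * (M4 * hr ^ 2 / 12) + bi * (M3 * hr ^ 2 / 6).
Proof.
  intros Eh Dy3 Dy4 HM3 HM4 Hrho Hsig.
  assert (A := T3 y y1 y2 y3 x hr M3 Hr ltac:(intros; apply Dy1; lra) ltac:(intros; apply Dy2; lra) ltac:(intros; apply Dy3; lra) Cr ltac:(intros; apply HM3; lra)).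
  assert (A4 := T4 y y1 y2 y3 y4 x hr M4 Hr ltac:(intros; apply Dy1; lra) ltac:(intros; apply Dy2; lra) ltac:(intros; apply Dy3; lra) ltac:(intros; apply Dy4; lra) Cr ltac:(intros; apply HM4; lra)).
  assert (B4 := T4b y y1 y2 y3 y4 x hl M4 Hl ltac:(intros; apply Dy1; lra) ltac:(intros; apply Dy2; lra) ltac:(intros; apply Dy3; lra) ltac:(intros; apply Dy4; lra) Cl ltac:(intros; apply HM4; lra)).
  subst hl.
  set (ep := y (x + hr) - y x - hr * y1 x - hr ^ 2 / 2 * y2 x) in A.
  set (e4 := y (x + hr) - y x - hr * y1 x - hr ^ 2 / 2 * y2 x - hr ^ 3 / 6 * y3 x) in A4.
  set (f4 := y (x - hr) - y x + hr * y1 x - hr ^ 2 / 2 * y2 x + hr ^ 3 / 6 * y3 x) in B4.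
  assert (BP : Rabs (ep / hr) <= M3 * hr ^ 2 / 6) by (apply abs_div_le; [lra| nra]).
  assert (BD : Rabs ((e4 + f4) / hr ^ 2) <= M4 * hr ^ 2 / 12).
  { apply abs_div_le; [nra|]. eapply Rle_trans; [apply Rabs_triang|]. lra. }
  assert (E : tloc eps s bi y y1 y2 x hr hr = (eps * (1 - s - rho)) * y2 x + (- (eps * s)) * ((e4 + f4) / hr ^ 2) + (- bi) * (ep / hr)).
  { unfold tloc, ep, e4, f4. apply (Rmult_eq_reg_l 2); [|lra].
    replace (2 * ((eps * (1 - s - rho)) * y2 x + (- (eps * s)) * (((y (x + hr) - y x - hr * y1 x - hr ^ 2 / 2 * y2 x - hr ^ 3 / 6 * y3 x) + (y (x - hr) - y x + hr * y1 x - hr ^ 2 / 2 * y2 x + hr ^ 3 / 6 * y3 x)) / hr ^ 2) + (- bi) * ((y (x + hr) - y x - hr * y1 x - hr ^ 2 / 2 * y2 x) / hr)))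
      with (2 * eps * (1 - s) * y2 x - 2 * (eps * rho) * y2 x + 2 * (- (eps * s)) * (((y (x + hr) - y x - hr * y1 x - hr ^ 2 / 2 * y2 x - hr ^ 3 / 6 * y3 x) + (y (x - hr) - y x + hr * y1 x - hr ^ 2 / 2 * y2 x + hr ^ 3 / 6 * y3 x)) / hr ^ 2) + 2 * (- bi) * ((y (x + hr) - y x - hr * y1 x - hr ^ 2 / 2 * y2 x) / hr)) by ring.
    rewrite Hrho. field. lra. }
  rewrite E. eapply Rle_trans; [apply abs3|].
  assert (Rabs (eps * (1 - s - rho) * y2 x) <= eps * (4 * rho ^ 2) * Rabs (y2 x)).
  { rewrite !Rabs_mult, (Rabs_pos_eq eps) by lra. apply Rmult_le_compat_r; [apply Rabs_pos|].
    apply Rmult_le_compat_l; lra. }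
  assert (Rabs (- (eps * s) * ((e4 + f4) / hr ^ 2)) <= eps * s * (M4 * hr ^ 2 / 12)).
  { apply abs_mul_le; auto. rewrite Rabs_Ropp, Rabs_mult, !Rabs_pos_eq by lra. lra. }
  assert (Rabs (- bi * (ep / hr)) <= bi * (M3 * hr ^ 2 / 6)).
  { apply abs_mul_le; auto. rewrite Rabs_Ropp, Rabs_pos_eq; lra. }
  lra.
Qed.

End Loc.

Lemma tau_tloc eps (b : R -> R) (xm : nat -> R) (g g1 g2 : R -> R) i : (1 <= i)%nat ->
  (forall t, Derive g t = g1 t) -> (forall t, Derive g1 t = g2 t) ->
  tau eps b xm g i = tloc eps (Defs.sigma (b (xm i) * hs xm (S i) / (2 * eps))) (b (xm i)) g g1 g2
     (xm i) (hs xm i) (hs xm (S i)).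
Proof.
  intros Hi E1 E2.
  assert (E3 : Derive_n g 2 (xm i) = g2 (xm i)).
  { simpl. rewrite <- E2. apply Derive_ext. intros t. apply E1. }
  unfold tau, tloc, D2, Dp, Dm, hbar. rewrite E3, E1.
  replace (xm i + hs xm (S i)) with (xm (S i)) by (unfold hs; simpl; rewrite Nat.sub_0_r; ring).
  replace (xm i - hs xm i) with (xm (i - 1)%nat) by (unfold hs; ring).
  reflexivity.
Qed.

Lemma mono0 (f df : R -> R) t : 0 <= t ->
  (forall x, is_derive f x (df x)) -> (forall x, 0 < x < t -> 0 <= df x) -> f 0 <= f t.
Proof.
  intros Ht Hd Hp. destruct (Req_dec t 0) as [E|E]; [subst; lra|].
  destruct (mvt_open f df 0 t ltac:(lra)) as [c [Pc Ec]].
  { intros; apply Hd. } { intros; apply (is_derive_cont _ _ (df x)); apply Hd. }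
  specialize (Hp c Pc). nra.
Qed.

Lemma exp_lb1 t : 0 <= t -> 1 + t <= exp t.
Proof. intros. destruct (Req_dec t 0); [subst; rewrite exp_0; lra|]. left; apply exp_ineq1; auto. Qed.

Lemma exp_lb2 t : 0 <= t -> 1 + t + t ^ 2 / 2 <= exp t.
Proof.
  intros Ht. pose proof (mono0 (fun x => exp x - (1 + x + x ^ 2 / 2)) (fun x => exp x - (1 + x)) t Ht) as H.
  simpl in H. rewrite exp_0 in H. assert (H' : 0 <= exp t - (1 + t + t * (t * 1) / 2)); [|lra].
  replace 0 with (1 - (1 + 0 + 0 * (0 * 1) / 2)) by field. apply H.
  - intros x. auto_derive; auto. field.
  - intros x Hx. pose proof (exp_lb1 x). lra.
Qed.

Lemma exp_lb3 t : 0 <= t -> 1 + t + t ^ 2 / 2 + t ^ 3 / 6 <= exp t.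
Proof.
  intros Ht. pose proof (mono0 (fun x => exp x - (1 + x + x ^ 2 / 2 + x ^ 3 / 6)) (fun x => exp x - (1 + x + x ^ 2 / 2)) t Ht) as H.
  simpl in H. rewrite exp_0 in H. simpl. enough (0 <= exp t - (1 + t + t * (t * 1) / 2 + t * (t * (t * 1)) / 6)) by lra.
  replace 0 with (1 - (1 + 0 + 0 * (0 * 1) / 2 + 0 * (0 * (0 * 1)) / 6)) by field. apply H.
  - intros x. auto_derive; auto. field.
  - intros x Hx. pose proof (exp_lb2 x). simpl in H0. lra.
Qed.

Lemma exp_ub3 t : 0 <= t <= 1 -> exp t <= 1 + t + t ^ 2 / 2 + t ^ 3.
Proof.
  intros Ht.
  assert (E1 : forall x, 0 <= x <= 1 -> exp x <= 1 + 6 * x).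
  { intros x Hx. pose proof (mono0 (fun z => 1 + 6 * z - exp z) (fun z => 6 - exp z) x ltac:(lra)) as H.
    simpl in H. rewrite exp_0 in H. enough (0 <= 1 + 6 * x - exp x) by lra.
    replace 0 with (1 + 6 * 0 - 1) by ring. apply H.
    - intros z. auto_derive; auto. ring.
    - intros z Hz. pose proof exp_le_3. assert (exp z <= exp 1) by (destruct (Req_dec z 1); [subst; lra| left; apply exp_increasing; lra]). lra. }
  assert (E2 : forall x, 0 <= x <= 1 -> exp x <= 1 + x + 3 * x ^ 2).
  { intros x Hx. pose proof (mono0 (fun z => 1 + z + 3 * z ^ 2 - exp z) (fun z => 1 + 6 * z - exp z) x ltac:(lra)) as H.
    simpl in H. rewrite exp_0 in H. simpl. enough (0 <= 1 + x + 3 * (x * (x * 1)) - exp x) by lra.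
    replace 0 with (1 + 0 + 3 * (0 * (0 * 1)) - 1) by ring. apply H.
    - intros z. auto_derive; auto. ring.
    - intros z Hz. pose proof (E1 z ltac:(lra)). lra. }
  pose proof (mono0 (fun z => 1 + z + z ^ 2 / 2 + z ^ 3 - exp z) (fun z => 1 + z + 3 * z ^ 2 - exp z) t ltac:(lra)) as H.
  simpl in H. rewrite exp_0 in H. simpl. enough (0 <= 1 + t + t * (t * 1) / 2 + t * (t * (t * 1)) - exp t) by lra.
  replace 0 with (1 + 0 + 0 * (0 * 1) / 2 + 0 * (0 * (0 * 1)) - 1) by field. apply H.
  - intros z. auto_derive; auto. field.
  - intros z Hz. pose proof (E2 z ltac:(lra)). simpl in H0. lra.
Qed.

Lemma sigma_pos rho : 0 < rho -> 0 < Defs.sigma rho <= 1.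
Proof.
  intros Hr. unfold Defs.sigma. destruct (Rlt_dec 0 rho) as [_|]; [|lra].
  pose proof (exp_lb1 (2 * rho) ltac:(lra)).
  assert (0 < exp (2 * rho) - 1) by lra.
  split. apply Rdiv_lt_0_compat; lra.
  apply (Rmult_le_reg_r (exp (2 * rho) - 1)); auto.
  unfold Rdiv; rewrite Rmult_assoc, Rinv_l by lra. lra.
Qed.

Lemma sigma_2nd rho : 0 < rho -> Rabs (1 - Defs.sigma rho - rho) <= 4 * rho ^ 2.
Proof.
  intros Hr. unfold Defs.sigma. destruct (Rlt_dec 0 rho) as [_|]; [|lra].
  set (t := 2 * rho). assert (Ht : 0 < t) by (unfold t; lra).
  set (E := exp t - 1).
  pose proof (exp_lb3 t ltac:(lra)) as L3. fold E in L3.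
  assert (EP : 0 < E) by (unfold E in *; assert (0 < t ^ 2 / 2 + t ^ 3 / 6) by (apply Rplus_lt_0_compat; apply Rdiv_lt_0_compat; try apply pow_lt; lra); lra).
  replace rho with (t / 2) by (unfold t; field).
  replace (4 * (t / 2) ^ 2) with (t ^ 2) by field.
  apply Rabs_le. split.
  -
    assert (t / E <= 1 - t / 2 + t ^ 2 / 4).
    { apply (Rmult_le_reg_r E); auto. replace (t / E * E) with t by (field; lra).
      assert (0 < 1 - t/2 + t^2/4) by (pose proof (pow2_ge_0 (t-1)); nra).
      apply Rle_trans with ((1 - t/2 + t^2/4) * (t + t^2/2 + t^3/6)).
      + assert (0 <= t^3/6 + t^4/24 + t^5/24) by (pose proof (pow_le t 3); pose proof (pow_le t 4); pose proof (pow_le t 5); lra).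
        replace ((1 - t/2 + t^2/4) * (t + t^2/2 + t^3/6)) with (t + (t^3/6 + t^4/24 + t^5/24)) by field. lra.
      + apply Rmult_le_compat_l; unfold E; lra. }
    pose proof (pow2_ge_0 t). lra.
  - assert (1 - t / 2 - t ^ 2 <= t / E).
    { apply (Rmult_le_reg_r E); auto. replace (t / E * E) with t by (field; lra).
      destruct (Rle_dec (1 - t / 2 - t ^ 2) 0) as [Hn|Hp].
      - nra.
      - assert (t <= 1) by nra.
        pose proof (exp_ub3 t ltac:(lra)) as U. fold E in U.
        assert (E <= t + t ^ 2 / 2 + t ^ 3) by (unfold E in *; lra).
        apply Rle_trans with ((1 - t / 2 - t ^ 2) * (t + t ^ 2 / 2 + t ^ 3)).
        + apply Rmult_le_compat_l; lra.
        + assert (0 <= t^3/4 + t^4 + t^5) by (pose proof (pow_le t 3); pose proof (pow_le t 4); pose proof (pow_le t 5); lra).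
          replace ((1 - t / 2 - t ^ 2) * (t + t ^ 2 / 2 + t ^ 3)) with (t - (t^3/4 + t^4 + t^5)) by field. lra. }
    lra.
Qed.

Lemma Ck_der g j x : CkR 4 g -> (j <= 3)%nat -> is_derive (Derive_n g j) x (Derive_n g (S j) x).
Proof.
  intros [H _] Hj. specialize (H (S j) x ltac:(lia)). simpl in H.
  apply Derive_correct in H. exact H.
Qed.

Lemma Ck_der0 g x : CkR 4 g -> is_derive g x (Derive_n g 1 x).
Proof. intros H. exact (Ck_der g 0 x H ltac:(lia)). Qed.

Lemma cont_bound (g : R -> R) : (forall x, 0 <= x <= 1 -> continuity_pt g x) ->
  exists M, 0 < M /\ forall x, 0 <= x <= 1 -> Rabs (g x) <= M.
Proof.
  intros Hc.
  destruct (continuity_ab_maj (fun x => Rabs (g x)) 0 1 ltac:(lra)) as [m [Hm Pm]].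
  { intros x Hx. apply (continuity_pt_comp g Rabs); [apply Hc; auto|apply Rcontinuity_abs]. }
  exists (Rabs (g m) + 1). split. pose proof (Rabs_pos (g m)); lra.
  intros x Hx. specialize (Hm x Hx). simpl in Hm. lra.
Qed.

Lemma Ck_bound g : CkR 4 g -> exists M, 0 < M /\ forall j x, (j <= 3)%nat -> 0 <= x <= 1 -> Rabs (Derive_n g j x) <= M.
Proof.
  intros H.
  assert (C : forall j, (j <= 3)%nat -> exists M, 0 < M /\ forall x, 0 <= x <= 1 -> Rabs (Derive_n g j x) <= M).
  { intros j Hj. apply cont_bound. intros x _. apply (is_derive_cont _ _ (Derive_n g (S j) x)). apply Ck_der; auto. }
  destruct (C 0%nat ltac:(lia)) as [M0 [P0 H0]].
  destruct (C 1%nat ltac:(lia)) as [M1 [P1 H1]].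
  destruct (C 2%nat ltac:(lia)) as [M2 [P2 H2]].
  destruct (C 3%nat ltac:(lia)) as [M3 [P3 H3]].
  exists (M0 + M1 + M2 + M3). split; [lra|].
  intros j x Hj Hx. destruct j as [|[|[|[|j]]]]; try lia.
  - specialize (H0 x Hx); lra.
  - specialize (H1 x Hx); lra.
  - specialize (H2 x Hx); lra.
  - specialize (H3 x Hx); lra.
Qed.

Lemma Ck_min b beta : CkR 4 b -> (forall x, 0 <= x <= 1 -> b x > beta) ->
  exists d, 0 < d /\ forall x, 0 <= x <= 1 -> beta + d <= b x.
Proof.
  intros H Hb.
  destruct (continuity_ab_min b 0 1 ltac:(lra)) as [m [Hm Pm]].
  { intros x _. apply (is_derive_cont _ _ (Derive_n b 1 x)). apply Ck_der0; auto. }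
  exists (b m - beta). split. specialize (Hb m Pm). lra.
  intros x Hx. specialize (Hm x Hx). lra.
Qed.

Section Mesh.
Variables (xi : R) (N J : nat).
Hypotheses (HJ : (1 <= J)%nat) (HJN : (J < N)%nat).

Let h := xi / INR J.
Let H := (1 - xi) / INR (N - J).

Lemma INR_J : 0 < INR J.
Proof. apply lt_0_INR. lia. Qed.
Lemma INR_NJ : 0 < INR (N - J).
Proof. apply lt_0_INR. lia. Qed.

Lemma mesh_lo i : (i <= J)%nat -> mesh xi N J i = INR i * h.
Proof. intros Hi. unfold mesh. destruct (Nat.leb_spec i J); [auto|lia]. Qed.

Lemma mesh_hi i : (J <= i)%nat -> mesh xi N J i = xi + INR (i - J) * H.
Proof.
  intros Hi. unfold mesh. destruct (Nat.leb_spec i J).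
  - assert (i = J) by lia. subst i. rewrite Nat.sub_diag. simpl. unfold h. pose proof INR_J. field. lra.
  - auto.
Qed.

Lemma hs_lo i : (1 <= i <= J)%nat -> hs (mesh xi N J) i = h.
Proof.
  intros Hi. unfold hs. rewrite !mesh_lo by lia.
  replace (INR i) with (INR (i - 1) + 1). ring.
  replace i with (S (i - 1)) at 2 by lia. rewrite S_INR. ring.
Qed.

Lemma hs_hi i : (J + 1 <= i)%nat -> hs (mesh xi N J) i = H.
Proof.
  intros Hi. unfold hs. rewrite !mesh_hi by lia.
  replace (i - J)%nat with (S (i - 1 - J)) by lia. rewrite S_INR. ring.
Qed.

End Mesh.

Lemma abs_add_le a b A B : Rabs a <= A -> Rabs b <= B -> Rabs (a + b) <= A + B.
Proof. intros. eapply Rle_trans; [apply Rabs_triang|]. lra. Qed.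
Lemma abs_sub_le a b A B : Rabs a <= A -> Rabs b <= B -> Rabs (a - b) <= A + B.
Proof. intros. unfold Rminus. eapply Rle_trans; [apply Rabs_triang|]. rewrite Rabs_Ropp. lra. Qed.
Lemma abs_opp_le a A : Rabs a <= A -> Rabs (- a) <= A.
Proof. intros. rewrite Rabs_Ropp. auto. Qed.
Lemma abs_const k : 0 <= k -> Rabs k <= k.
Proof. intros. rewrite Rabs_pos_eq; lra. Qed.

Ltac bt := first
 [ eapply abs_add_le; [bt|bt]
 | eapply abs_sub_le; [bt|bt]
 | eapply abs_mul_le; [bt|bt]
 | eapply abs_opp_le; bt
 | apply abs_const; lra
 | eassumption ].

Lemma abs_div_b a d S beta : 0 < beta -> beta <= d -> Rabs a <= S -> Rabs (a / d) <= S / beta.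
Proof.
  intros Hb Hd Ha. apply abs_div_le; [lra|].
  assert (0 <= S) by (pose proof (Rabs_pos a); lra).
  apply Rle_trans with S; auto.
  replace S with (S / beta * beta) at 1 by (field; lra).
  apply Rmult_le_compat_l; auto. apply Rdiv_le_0_compat; lra.
Qed.

Ltac exD2 := repeat match goal with
 | |- _ /\ _ => split
 | |- True => exact I
 | H : is_derive ?g ?s ?l |- ex_derive ?f ?s => exists l; exact H
 | |- _ <> _ => let H := fresh in intro H; lra
 end.
Ltac autoD2 := auto_derive; [exD2 | rwD].

Section U0.
Variables (b b1 b2 b3 c c1 c2 c3 f f1 f2 f3 : R -> R) (beta d M : R).
Hypotheses (Db1 : forall x, is_derive b x (b1 x)) (Db2 : forall x, is_derive b1 x (b2 x))
  (Db3 : forall x, is_derive b2 x (b3 x))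
  (Dc1 : forall x, is_derive c x (c1 x)) (Dc2 : forall x, is_derive c1 x (c2 x))
  (Dc3 : forall x, is_derive c2 x (c3 x))
  (Df1 : forall x, is_derive f x (f1 x)) (Df2 : forall x, is_derive f1 x (f2 x))
  (Df3 : forall x, is_derive f2 x (f3 x)).
Hypotheses (Hbeta : 0 < beta) (Hd : 0 < d) (HM : beta <= M) (HM1 : 1 <= M)
  (Hbmin : forall x, 0 <= x <= 1 -> beta + d <= b x)
  (Hcpos : forall x, 0 <= x <= 1 -> 0 <= c x)
  (Bb : forall x, 0 <= x <= 1 -> Rabs (b x) <= M) (Bb1 : forall x, 0 <= x <= 1 -> Rabs (b1 x) <= M)
  (Bb2 : forall x, 0 <= x <= 1 -> Rabs (b2 x) <= M) (Bb3 : forall x, 0 <= x <= 1 -> Rabs (b3 x) <= M)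
  (Bc : forall x, 0 <= x <= 1 -> Rabs (c x) <= M) (Bc1 : forall x, 0 <= x <= 1 -> Rabs (c1 x) <= M)
  (Bc2 : forall x, 0 <= x <= 1 -> Rabs (c2 x) <= M) (Bc3 : forall x, 0 <= x <= 1 -> Rabs (c3 x) <= M)
  (Bf : forall x, 0 <= x <= 1 -> Rabs (f x) <= M) (Bf1 : forall x, 0 <= x <= 1 -> Rabs (f1 x) <= M)
  (Bf2 : forall x, 0 <= x <= 1 -> Rabs (f2 x) <= M) (Bf3 : forall x, 0 <= x <= 1 -> Rabs (f3 x) <= M).

Variable u0 : R -> R.
Hypotheses (Hu0d : forall x, ex_derive u0 x)
  (Hode0 : forall x, 0 < x < 1 -> - b x * Derive u0 x + c x * u0 x = f x) (Hu01 : u0 1 = 0).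

Definition P1 x := (c x * u0 x - f x) / b x.
Definition P2 x := (c1 x * u0 x + c x * P1 x - f1 x - b1 x * P1 x) / b x.
Definition P3 x := (c2 x * u0 x + 2 * c1 x * P1 x + c x * P2 x - f2 x - b2 x * P1 x - 2 * b1 x * P2 x) / b x.
Definition P4 x := (c3 x * u0 x + 3 * c2 x * P1 x + 3 * c1 x * P2 x + c x * P3 x - f3 x
   - b3 x * P1 x - 3 * b2 x * P2 x - 3 * b1 x * P3 x) / b x.

Lemma bpos x : 0 <= x <= 1 -> 0 < b x.
Proof. intros; specialize (Hbmin x H); lra. Qed.

Lemma dP0 x : 0 < x < 1 -> is_derive u0 x (P1 x).
Proof.
  intros Hx. pose proof (Derive_correct _ _ (Hu0d x)) as H.
  replace (P1 x) with (Derive u0 x); auto.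
  unfold P1. specialize (Hode0 x Hx). pose proof (bpos x ltac:(lra)).
  apply (Rmult_eq_reg_l (b x)); [|lra].
  replace (b x * ((c x * u0 x - f x) / b x)) with (c x * u0 x - f x) by (field; lra). lra.
Qed.

Lemma dP1 x : 0 < x < 1 -> is_derive P1 x (P2 x).
Proof.
  intros Hx. pose proof (dP0 x Hx). pose proof (bpos x ltac:(lra)).
  specialize (Db1 x). specialize (Dc1 x). specialize (Df1 x).
  unfold P1 at 1. autoD2. unfold P2, P1. field. lra.
Qed.

Lemma dP2 x : 0 < x < 1 -> is_derive P2 x (P3 x).
Proof.
  intros Hx. pose proof (dP0 x Hx). pose proof (dP1 x Hx). pose proof (bpos x ltac:(lra)).
  specialize (Db1 x). specialize (Dc1 x). specialize (Df1 x).
  specialize (Db2 x). specialize (Dc2 x). specialize (Df2 x).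
  unfold P2 at 1. autoD2. unfold P3, P2. field. lra.
Qed.

Lemma dP3 x : 0 < x < 1 -> is_derive P3 x (P4 x).
Proof.
  intros Hx. pose proof (dP0 x Hx). pose proof (dP1 x Hx). pose proof (dP2 x Hx). pose proof (bpos x ltac:(lra)).
  specialize (Db1 x). specialize (Dc1 x). specialize (Df1 x).
  specialize (Db2 x). specialize (Dc2 x). specialize (Df2 x).
  specialize (Db3 x). specialize (Dc3 x). specialize (Df3 x).
  unfold P3 at 1. autoD2. unfold P4, P3. field. lra.
Qed.

Definition K0 := M / beta + 1.
Definition K1 := 16 * M * K0 / beta.
Definition K2 := 16 * M * K1 / beta.
Definition K3 := 16 * M * K2 / beta.
Definition K4 := 16 * M * K3 / beta.

Lemma Kmono q : 1 <= q -> q <= 16 * M * q / beta.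
Proof.
  intros Hq. apply (Rmult_le_reg_r beta); auto.
  replace (16 * M * q / beta * beta) with (16 * M * q) by (field; lra). nra.
Qed.

Lemma K_facts : 1 <= K0 /\ K0 <= K1 /\ K1 <= K2 /\ K2 <= K3 /\ K3 <= K4.
Proof.
  assert (1 <= K0) by (unfold K0; assert (0 <= M / beta) by (apply Rdiv_le_0_compat; lra); lra).
  assert (K0 <= K1) by (apply Kmono; lra).
  assert (K1 <= K2) by (apply Kmono; lra).
  assert (K2 <= K3) by (apply Kmono; lra).
  assert (K3 <= K4) by (apply Kmono; lra).
  tauto.
Qed.

Lemma div_mono S T : S <= T -> S / beta <= T / beta.
Proof. intros. apply Rmult_le_compat_r; [left; apply Rinv_0_lt_compat|]; lra. Qed.

Lemma u0_cont t : continuity_pt u0 t.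
Proof. apply (is_derive_cont _ _ (Derive u0 t)). apply Derive_correct, Hu0d. Qed.

Lemma P1_lb t : 0 <= t <= 1 -> 0 <= u0 t -> - (M / beta) <= P1 t.
Proof.
  intros Ht Hu. pose proof (bpos t Ht). unfold P1.
  replace ((c t * u0 t - f t) / b t) with (c t * u0 t / b t - f t / b t) by (field; lra).
  assert (0 <= c t * u0 t / b t) by (apply Rdiv_le_0_compat; [apply Rmult_le_pos; auto|lra]).
  assert (HH : Rabs (f t / b t) <= M / beta) by (apply abs_div_b; auto; specialize (Hbmin t Ht); lra).
  apply Rabs_le_between in HH. lra.
Qed.

Lemma P1_ub t : 0 <= t <= 1 -> u0 t <= 0 -> P1 t <= M / beta.
Proof.
  intros Ht Hu. pose proof (bpos t Ht). unfold P1.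
  replace ((c t * u0 t - f t) / b t) with (c t * u0 t / b t - f t / b t) by (field; lra).
  assert (c t * u0 t / b t <= 0).
  { unfold Rdiv. assert (c t * u0 t <= 0) by (specialize (Hcpos t Ht); nra).
    assert (0 < / b t) by (apply Rinv_0_lt_compat; lra). nra. }
  assert (HH : Rabs (f t / b t) <= M / beta) by (apply abs_div_b; auto; specialize (Hbmin t Ht); lra).
  apply Rabs_le_between in HH. lra.
Qed.

Lemma u0_bnd x : 0 <= x <= 1 -> Rabs (u0 x) <= K0.
Proof.
  assert (key : forall s, (s = 1 \/ s = -1) -> forall z, 0 < z <= 1 -> s * u0 z - K0 * (1 - z) <= 0).
  { intros s Hs z Hz.
    apply (fc_bwd (fun t => s * u0 t - K0 * (1 - t)) (fun t => s * P1 t + K0) z 1); try lra.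
    - intros t Ht. apply continuity_pt_minus.
      + apply continuity_pt_mult; [apply continuity_pt_const; intros ??; auto| apply u0_cont].
      + apply continuity_pt_mult; [apply continuity_pt_const; intros ??; auto|].
        apply continuity_pt_minus; [apply continuity_pt_const; intros ??; auto|apply continuity_pt_id].
    - intros t Ht. pose proof (dP0 t ltac:(lra)). autoD2. ring.
    - simpl. rewrite Hu01. lra.
    - intros t Ht Hq. pose proof K_facts. assert (0 <= K0 * (1 - t)) by (apply Rmult_le_pos; lra).
      simpl in Hq. destruct Hs; subst s.
      + assert (0 <= u0 t) by lra. pose proof (P1_lb t ltac:(lra) H1). unfold K0. lra.
      + assert (u0 t <= 0) by lra. pose proof (P1_ub t ltac:(lra) H1). unfold K0. lra. }
  assert (key0 : forall s, (s = 1 \/ s = -1) -> forall z, 0 <= z <= 1 -> s * u0 z - K0 * (1 - z) <= 0).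
  { intros s Hs z Hz. destruct (Req_dec z 0) as [E|E]; [|apply key; auto; lra].
    subst z. apply (cont_ext0 (fun z => s * u0 z - K0 * (1 - z))).
    - apply continuity_pt_minus.
      + apply continuity_pt_mult; [apply continuity_pt_const; intros ??; auto| apply u0_cont].
      + apply continuity_pt_mult; [apply continuity_pt_const; intros ??; auto|].
        apply continuity_pt_minus; [apply continuity_pt_const; intros ??; auto|apply continuity_pt_id].
    - intros z Hz'. apply key; auto; lra. }
  intros Hx. pose proof (key0 1 (or_introl eq_refl) x Hx). pose proof (key0 (-1) (or_intror eq_refl) x Hx).
  pose proof K_facts. apply Rabs_le. assert (0 <= K0 * x) by nra. nra.
Qed.

Lemma P_bnd x : 0 <= x <= 1 ->
  Rabs (P1 x) <= K1 /\ Rabs (P2 x) <= K2 /\ Rabs (P3 x) <= K3 /\ Rabs (P4 x) <= K4.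
Proof.
  intros Hx. pose proof K_facts as KF. pose proof (bpos x Hx).
  assert (Hbb : beta <= b x) by (specialize (Hbmin x Hx); lra).
  pose proof (u0_bnd x Hx).
  pose proof (Bb x Hx). pose proof (Bb1 x Hx). pose proof (Bb2 x Hx). pose proof (Bb3 x Hx).
  pose proof (Bc x Hx). pose proof (Bc1 x Hx). pose proof (Bc2 x Hx). pose proof (Bc3 x Hx).
  pose proof (Bf x Hx). pose proof (Bf1 x Hx). pose proof (Bf2 x Hx). pose proof (Bf3 x Hx).
  assert (B1 : Rabs (P1 x) <= K1).
  { unfold P1. eapply Rle_trans; [eapply (abs_div_b _ _ _ beta); [auto|auto|bt]|].
    unfold K1. apply div_mono. nra. }
  assert (B2 : Rabs (P2 x) <= K2).
  { unfold P2. eapply Rle_trans; [eapply (abs_div_b _ _ _ beta); [auto|auto|bt]|].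
    unfold K2. apply div_mono. nra. }
  assert (B3 : Rabs (P3 x) <= K3).
  { unfold P3. eapply Rle_trans; [eapply (abs_div_b _ _ _ beta); [auto|auto|bt]|].
    unfold K3. apply div_mono. nra. }
  assert (B4 : Rabs (P4 x) <= K4).
  { unfold P4. eapply Rle_trans; [eapply (abs_div_b _ _ _ beta); [auto|auto|bt]|].
    unfold K4. apply div_mono. nra. }
  tauto.
Qed.

Lemma loc01 x : 0 < x < 1 -> locally x (fun t => 0 < t < 1).
Proof.
  intros Hx. apply (locally_open (fun t => 0 < t /\ t < 1)); auto.
  apply open_and; [apply open_gt|apply open_lt].
Qed.

Hypothesis Hu0dd : forall x, ex_derive (Derive u0) x.

Lemma D2u0 x : 0 < x < 1 -> Derive (Derive u0) x = P2 x.
Proof.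
  intros Hx. apply is_derive_unique.
  apply (is_derive_ext_loc P1).
  - apply (locally_open (fun t => 0 < t /\ t < 1)); auto.
    + apply open_and; [apply open_gt|apply open_lt].
    + intros t Ht. symmetry. apply is_derive_unique. apply dP0; auto.
  - apply dP1; auto.
Qed.

Lemma D1u0_0 : Derive u0 0 = P1 0.
Proof.
  apply cont_eq0.
  - apply (is_derive_cont _ _ (Derive (Derive u0) 0)). apply Derive_correct, Hu0dd.
  - pose proof (bpos 0 ltac:(lra)). specialize (Db1 0). specialize (Dc1 0). specialize (Df1 0).
    pose proof (Derive_correct _ _ (Hu0d 0)) as HH.
    apply (is_derive_cont _ _ (((c1 0 * u0 0 + c 0 * Derive u0 0 - f1 0) * b 0 - (c 0 * u0 0 - f 0) * b1 0) / (b 0) ^ 2)).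
    unfold P1. autoD2. field. lra.
  - intros x Hx. apply is_derive_unique. apply dP0; auto.
Qed.

Variables (eps : R) (u : R -> R).
Hypotheses (He : 0 < eps < 1) (Hud : forall x, ex_derive u x) (Hudd : forall x, ex_derive (Derive u) x)
  (Hode : forall x, 0 < x < 1 -> - eps * Derive_n u 2 x - b x * Derive u x + c x * u x = f x)
  (Hu00 : u 0 = 0) (Hu1 : u 1 = 0).

Definition exb x := exp (- beta * x / eps).

Lemma d_ex x : is_derive exb x (- (beta / eps) * exb x).
Proof. unfold exb. auto_derive; auto. unfold Rdiv. ring. Qed.

Lemma ex_pos x : 0 < exb x.
Proof. apply exp_pos. Qed.

Lemma ex_le1 x : 0 <= x -> exb x <= 1.
Proof.
  intros Hx. unfold exb. rewrite <- exp_0.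
  assert (- beta * x / eps <= 0).
  { assert (0 <= beta * x / eps) by (apply Rdiv_le_0_compat; nra).
    replace (- beta * x / eps) with (- (beta * x / eps)) by (field; lra). lra. }
  destruct (Req_dec (- beta * x / eps) 0) as [E|E]; [rewrite E; lra|].
  left. apply exp_increasing. lra.
Qed.

Lemma dU x : is_derive u x (Derive u x).
Proof. apply Derive_correct, Hud. Qed.
Lemma dU1 x : is_derive (Derive u) x (Derive (Derive u) x).
Proof. apply Derive_correct, Hudd. Qed.
Lemma dV x : is_derive u0 x (Derive u0 x).
Proof. apply Derive_correct, Hu0d. Qed.
Lemma dV1 x : is_derive (Derive u0) x (Derive (Derive u0) x).
Proof. apply Derive_correct, Hu0dd. Qed.

Lemma ode x : 0 < x < 1 -> eps * Derive (Derive u) x = - b x * Derive u x + c x * u x - f x.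
Proof. intros Hx. specialize (Hode x Hx). change (Derive_n u 2 x) with (Derive (Derive u) x) in Hode. lra. Qed.

Definition Aw := K2 / beta + 1.

Lemma w_bnd : forall x, 0 <= x <= 1 -> Rabs (u x - u0 x) <= 2 * Aw * eps + K0 * exb x.
Proof.
  assert (KF := K_facts).
  assert (Awp : 1 <= Aw) by (unfold Aw; assert (0 <= K2/beta) by (apply Rdiv_le_0_compat; lra); lra).
  assert (HA : beta * Aw > K2) by (unfold Aw; replace (beta * (K2 / beta + 1)) with (K2 + beta) by (field; lra); lra).
  assert (key : forall s, (s = 1 \/ s = -1) -> forall x, 0 <= x <= 1 ->
    0 <= Aw * eps * (2 - x) + K0 * exb x - s * (u x - u0 x)).
  { intros s Hs.
    apply (max_princ eps b c
      (fun x => Aw * eps * (2 - x) + K0 * exb x - s * (u x - u0 x))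
      (fun x => - Aw * eps + K0 * (- (beta / eps) * exb x) - s * (Derive u x - Derive u0 x))
      (fun x => K0 * ((beta / eps) ^ 2 * exb x) - s * (Derive (Derive u) x - Derive (Derive u0) x))); try lra.
    - intros x Hx; apply Hcpos; lra.
    - intros x Hx. apply (is_derive_cont _ _ (- Aw * eps + K0 * (- (beta / eps) * exb x) - s * (Derive u x - Derive u0 x))).
      pose proof (dU x). pose proof (dV x). pose proof (d_ex x). autoD2. ring.
    - intros x Hx. pose proof (dU x). pose proof (dV x). pose proof (d_ex x). autoD2. ring.
    - intros x Hx. pose proof (dU1 x). pose proof (dV1 x). pose proof (d_ex x). autoD2. field. lra.
    - intros x Hx. pose proof (ode x Hx) as O1. pose proof (D2u0 x Hx) as O2.
      pose proof (Hode0 x Hx) as O3. pose proof (bpos x ltac:(lra)) as Hb0.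
      assert (EU2 : Derive (Derive u) x = (- b x * Derive u x + c x * u x - f x) / eps) by (rewrite <- O1; field; lra).
      assert (EV1 : Derive u0 x = (c x * u0 x - f x) / b x) by (apply (Rmult_eq_reg_l (b x)); [|lra]; field_simplify; lra).
      rewrite EU2, O2, EV1.
      set (T1 := Aw * eps * b x). set (T2 := K0 * (beta / eps) * exb x * (b x - beta)).
      set (T3 := c x * (Aw * eps * (2 - x) + K0 * exb x)).
      match goal with |- 0 < ?e => replace e with (T1 + T2 + T3 - s * eps * P2 x) end.
      2:{ unfold T1, T2, T3. field. lra. }
      pose proof (P_bnd x ltac:(lra)) as [_ [PB2 _]].
      assert (T1 >= Aw * eps * beta + Aw * eps * d).
      { unfold T1. specialize (Hbmin x ltac:(lra)). assert (0 < Aw * eps) by (nra). nra. }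
      assert (0 <= T2).
      { unfold T2. specialize (Hbmin x ltac:(lra)). pose proof (ex_pos x). apply Rmult_le_pos; [|lra].
        apply Rmult_le_pos; [|lra]. apply Rmult_le_pos; [lra|]. apply Rdiv_le_0_compat; lra. }
      assert (0 <= T3).
      { unfold T3. specialize (Hcpos x ltac:(lra)). pose proof (ex_pos x). apply Rmult_le_pos; [lra|].
        assert (0 <= Aw * eps * (2 - x)) by (apply Rmult_le_pos; [|lra]; nra). nra. }
      assert (s * eps * P2 x <= eps * K2).
      { apply Rabs_le_between in PB2. destruct Hs; subst s; nra. }
      assert (Aw * eps * d >= 0) by (assert (0 < Aw * eps) by nra; nra).
      nra.
    - pose proof (u0_bnd 0 ltac:(lra)) as U. apply Rabs_le_between in U.
      unfold exb. replace (- beta * 0 / eps) with 0 by (field; lra). rewrite exp_0, Hu00.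
      assert (0 < Aw * eps) by (nra).
      destruct Hs; subst s; lra.
    - rewrite Hu1, Hu01. pose proof (ex_pos 1). pose proof (KF) as [K0p _].
      assert (0 < Aw * eps) by (nra). nra. }
  intros x Hx. pose proof (key 1 (or_introl eq_refl) x Hx). pose proof (key (-1) (or_intror eq_refl) x Hx).
  assert (0 <= Aw * eps * x) by (apply Rmult_le_pos; [|lra]; nra).
  apply Rabs_le. nra.
Qed.

Definition Ku := M / beta + 1.

Lemma u_bnd : forall x, 0 <= x <= 1 -> Rabs (u x) <= Ku * (1 - x).
Proof.
  assert (Kup : 1 <= Ku) by (unfold Ku; assert (0 <= M / beta) by (apply Rdiv_le_0_compat; lra); lra).
  assert (key : forall s, (s = 1 \/ s = -1) -> forall x, 0 <= x <= 1 -> 0 <= Ku * (1 - x) - s * u x).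
  { intros s Hs.
    apply (max_princ eps b c (fun x => Ku * (1 - x) - s * u x) (fun x => - Ku - s * Derive u x)
       (fun x => - s * Derive (Derive u) x)); try lra.
    - intros x Hx; apply Hcpos; lra.
    - intros x Hx. apply (is_derive_cont _ _ (- Ku - s * Derive u x)). pose proof (dU x). autoD2. ring.
    - intros x Hx. pose proof (dU x). autoD2. ring.
    - intros x Hx. pose proof (dU1 x). autoD2. ring.
    - intros x Hx. pose proof (ode x Hx) as O1.
      match goal with |- 0 < ?e => replace e with (Ku * b x + c x * Ku * (1 - x) - s * f x) end.
      2:{ replace (- eps * (- s * Derive (Derive u) x)) with (s * (eps * Derive (Derive u) x)) by ring.
          rewrite O1. ring. }
      specialize (Hbmin x ltac:(lra)). specialize (Hcpos x ltac:(lra)). specialize (Bf x ltac:(lra)).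
      apply Rabs_le_between in Bf.
      assert (Ku * b x >= Ku * beta + Ku * d) by nra.
      assert (Ku * beta = M + beta) by (unfold Ku; field; lra).
      assert (0 <= c x * Ku * (1 - x)) by (apply Rmult_le_pos; [nra|lra]).
      destruct Hs; subst s; nra.
    - rewrite Hu00. lra.
    - rewrite Hu1. lra. }
  intros x Hx. pose proof (key 1 (or_introl eq_refl) x Hx). pose proof (key (-1) (or_intror eq_refl) x Hx).
  apply Rabs_le. lra.
Qed.

Lemma Du1_bnd : Rabs (Derive u 1) <= Ku.
Proof.
  apply Rabs_le. split.
  - destruct (Rle_dec (- Ku) (Derive u 1)) as [|Hn]; [auto|exfalso].
    destruct (deriv_neg_left (fun t => u t - Ku * (1 - t)) 1 (Derive u 1 + Ku)) as [dl [Hdl P]].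
    { pose proof (dU 1). autoD2. ring. } { lra. }
    pose proof (Rmin_r dl 1). pose proof (Rmin_l dl 1). assert (0 < Rmin dl 1) by (apply Rmin_pos; lra).
    set (s := 1 - Rmin dl 1 / 2).
    specialize (P s ltac:(unfold s; lra)). simpl in P. rewrite Hu1 in P.
    pose proof (u_bnd s ltac:(unfold s; lra)) as U. apply Rabs_le_between in U. lra.
  - destruct (Rle_dec (Derive u 1) Ku) as [|Hn]; [auto|exfalso].
    destruct (deriv_pos_left (fun t => u t + Ku * (1 - t)) 1 (Derive u 1 - Ku)) as [dl [Hdl P]].
    { pose proof (dU 1). autoD2. ring. } { lra. }
    pose proof (Rmin_r dl 1). pose proof (Rmin_l dl 1). assert (0 < Rmin dl 1) by (apply Rmin_pos; lra).
    set (s := 1 - Rmin dl 1 / 2).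
    specialize (P s ltac:(unfold s; lra)). simpl in P. rewrite Hu1 in P.
    pose proof (u_bnd s ltac:(unfold s; lra)) as U. apply Rabs_le_between in U. lra.
Qed.

Definition Gm := 2 * M * (2 * Aw + K0).
Definition Cpsi := Ku + Gm * (1 + 1 / beta).

Lemma Psi0_bnd : Rabs (eps * Derive u 0 - b 0 * u0 0) <= eps * Cpsi.
Proof.
  set (Psi := fun x => eps * Derive u x + b x * u x - b x * u0 x).
  assert (E0 : Psi 0 = eps * Derive u 0 - b 0 * u0 0) by (unfold Psi; rewrite Hu00; ring).
  assert (E1 : Psi 1 = eps * Derive u 1) by (unfold Psi; rewrite Hu1, Hu01; ring).
  assert (KF := K_facts).
  assert (Awp : 1 <= Aw) by (unfold Aw; assert (0 <= K2/beta) by (apply Rdiv_le_0_compat; lra); lra).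
  assert (Gmp : 0 <= Gm) by (unfold Gm; apply Rmult_le_pos; lra).
  assert (MB := mono_bound Psi (fun x => (c x + b1 x) * (u x - u0 x))
     (fun x => Gm * (eps * x - eps / beta * exb x)) (fun x => Gm * (eps + exb x)) 0 1 ltac:(lra)).
  rewrite E0, E1 in MB.
  assert (HH : Rabs (eps * Derive u 1 - (eps * Derive u 0 - b 0 * u0 0)) <=
     Gm * (eps * 1 - eps / beta * exb 1) - Gm * (eps * 0 - eps / beta * exb 0)).
  { apply MB.
    - intros x Hx. pose proof (dU x). pose proof (dU1 x). pose proof (dP0 x Hx). specialize (Db1 x).
      pose proof (ode x Hx) as O1. pose proof (Hode0 x Hx) as O2. pose proof (bpos x ltac:(lra)).
      assert (Derive u0 x = P1 x) by (apply is_derive_unique; auto).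
      assert (EU2 : Derive (Derive u) x = (- b x * Derive u x + c x * u x - f x) / eps) by (rewrite <- O1; field; lra).
      unfold Psi. autoD2. rewrite EU2. replace (Derive u0 x) with (P1 x). unfold P1. field. lra.
    - intros x Hx. pose proof (d_ex x). autoD2. field. lra.
    - intros x Hx. unfold Psi. apply (is_derive_cont _ _ (eps * Derive (Derive u) x + (b1 x * u x + b x * Derive u x) - (b1 x * u0 x + b x * Derive u0 x))).
      pose proof (dU x). pose proof (dU1 x). pose proof (dV x). specialize (Db1 x). autoD2. ring.
    - intros x Hx. pose proof (d_ex x). apply (is_derive_cont _ _ (Gm * (eps + exb x))). autoD2. field. lra.
    - intros x Hx. pose proof (w_bnd x ltac:(lra)) as W. rewrite Rabs_mult.
      pose proof (Bc x ltac:(lra)). pose proof (Bb1 x ltac:(lra)).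
      assert (Rabs (c x + b1 x) <= 2 * M) by (eapply Rle_trans; [apply Rabs_triang|lra]).
      apply Rle_trans with (2 * M * (2 * Aw * eps + K0 * exb x)).
      + apply Rmult_le_compat; auto; apply Rabs_pos.
      + unfold Gm. pose proof (ex_pos x). assert (exb x <= 1) by (apply ex_le1; lra).
        assert (0 <= 2 * M) by lra.
        assert (2 * Aw * eps + K0 * exb x <= (2 * Aw + K0) * (eps + exb x)) by nra. nra. }
  assert (ex0 : exb 0 = 1) by (unfold exb; replace (- beta * 0 / eps) with 0 by (field; lra); apply exp_0).
  rewrite ex0 in HH. pose proof (ex_pos 1).
  assert (Gm * (eps * 1 - eps / beta * exb 1) - Gm * (eps * 0 - eps / beta * 1) <= Gm * (eps * (1 + 1 / beta))).
  { assert (0 <= eps / beta * exb 1) by (apply Rmult_le_pos; [apply Rdiv_le_0_compat|]; lra).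
    assert (0 <= Gm * (eps / beta * exb 1)) by (apply Rmult_le_pos; lra).
    replace (Gm * (eps * 1 - eps / beta * exb 1) - Gm * (eps * 0 - eps / beta * 1)) with
      (Gm * (eps * (1 + 1 / beta)) - Gm * (eps / beta * exb 1)) by (field; lra). lra. }
  pose proof Du1_bnd as D1. 
  assert (Rabs (eps * Derive u 1) <= eps * Ku) by (rewrite Rabs_mult, Rabs_pos_eq by lra; apply Rmult_le_compat_l; lra).
  replace (eps * Derive u 0 - b 0 * u0 0) with (eps * Derive u 1 - (eps * Derive u 1 - (eps * Derive u 0 - b 0 * u0 0))) by ring.
  eapply Rle_trans; [apply abs_sub_le; eassumption|].
  unfold Cpsi. replace (Gm * (eps * (1 + 1 / beta))) with (eps * (Gm * (1 + 1 / beta))) by ring. lra.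
Qed.

Definition Kv := - (eps * Derive u 0 / b 0).
Definition E0 x := exp (- b 0 * x / eps).
Definition vf x := Kv * E0 x.
Definition yf x := u x - u0 x - vf x.
Definition Lam x := E0 x * ((b x - b 0) * b 0 / eps + c x).
Definition Lam1 x := E0 x * (- (b 0 / eps) * ((b x - b 0) * b 0 / eps + c x) + (b1 x * b 0 / eps + c1 x)).
Definition Lam2 x := E0 x * ((b 0 / eps) ^ 2 * ((b x - b 0) * b 0 / eps + c x)
   - 2 * (b 0 / eps) * (b1 x * b 0 / eps + c1 x) + (b2 x * b 0 / eps + c2 x)).
Definition gf x := eps * P2 x - Kv * Lam x.
Definition g1 x := eps * P3 x - Kv * Lam1 x.
Definition g2 x := eps * P4 x - Kv * Lam2 x.
Definition y1 x := Derive u x - Derive u0 x - Kv * (- (b 0 / eps)) * E0 x.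
Definition y2 x := Derive (Derive u) x - Derive (Derive u0) x - Kv * (b 0 / eps) ^ 2 * E0 x.
Definition y3 x := (- b1 x * y1 x - b x * y2 x + c1 x * yf x + c x * y1 x - g1 x) / eps.
Definition y4 x := (- b2 x * y1 x - 2 * b1 x * y2 x - b x * y3 x + c2 x * yf x + 2 * c1 x * y1 x
   + c x * y2 x - g2 x) / eps.

Lemma dE0 x : is_derive E0 x (- (b 0 / eps) * E0 x).
Proof. unfold E0. auto_derive; auto. unfold Rdiv. ring. Qed.

Lemma dyf x : is_derive yf x (y1 x).
Proof.
  pose proof (dU x). pose proof (dV x). pose proof (dE0 x).
  unfold yf, vf. autoD2. unfold y1. ring.
Qed.

Lemma dy1 x : is_derive y1 x (y2 x).
Proof.
  pose proof (dU1 x). pose proof (dV1 x). pose proof (dE0 x).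
  unfold y1. autoD2. unfold y2. field. lra.
Qed.

Lemma dLam x : is_derive Lam x (Lam1 x).
Proof.
  pose proof (dE0 x). specialize (Db1 x). specialize (Dc1 x).
  unfold Lam. autoD2. unfold Lam1. field. lra.
Qed.

Lemma dLam1 x : is_derive Lam1 x (Lam2 x).
Proof.
  pose proof (dE0 x). specialize (Db1 x). specialize (Dc1 x). specialize (Db2 x). specialize (Dc2 x).
  unfold Lam1. autoD2. unfold Lam2. field. lra.
Qed.

Lemma dg x : 0 < x < 1 -> is_derive gf x (g1 x).
Proof. intros Hx. pose proof (dP2 x Hx). pose proof (dLam x). unfold gf. autoD2. unfold g1. ring. Qed.

Lemma dg1 x : 0 < x < 1 -> is_derive g1 x (g2 x).
Proof. intros Hx. pose proof (dP3 x Hx). pose proof (dLam1 x). unfold g1. autoD2. unfold g2. ring. Qed.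

Lemma yode x : 0 < x < 1 -> eps * y2 x = - b x * y1 x + c x * yf x - gf x.
Proof.
  intros Hx. pose proof (ode x Hx) as O1. pose proof (D2u0 x Hx) as O2. pose proof (Hode0 x Hx) as O3.
  pose proof (bpos x ltac:(lra)) as Hb0.
  assert (EV1 : Derive u0 x = (c x * u0 x - f x) / b x) by (apply (Rmult_eq_reg_l (b x)); [|lra]; field_simplify; lra).
  assert (EU2 : Derive (Derive u) x = (- b x * Derive u x + c x * u x - f x) / eps) by (rewrite <- O1; field; lra).
  unfold y2, y1, yf, vf, gf, Lam. rewrite EU2, O2, EV1.
  unfold P2, P1. field. lra.
Qed.

Lemma dy2 x : 0 < x < 1 -> is_derive y2 x (y3 x).
Proof.
  intros Hx.
  apply (is_derive_ext_loc (fun t => (- b t * y1 t + c t * yf t - gf t) / eps)).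
  - apply (locally_open (fun t => 0 < t /\ t < 1)); auto.
    + apply open_and; [apply open_gt|apply open_lt].
    + intros t Ht. change ((- b t * y1 t + c t * yf t - gf t) / eps = y2 t). rewrite <- yode by auto. field. lra.
  - pose proof (dyf x). pose proof (dy1 x). pose proof (dg x Hx). specialize (Db1 x). specialize (Dc1 x).
    autoD2. unfold y3. field. lra.
Qed.

Lemma dy3 x : 0 < x < 1 -> is_derive y3 x (y4 x).
Proof.
  intros Hx. pose proof (dyf x). pose proof (dy1 x). pose proof (dy2 x Hx). pose proof (dg1 x Hx).
  specialize (Db1 x). specialize (Dc1 x). specialize (Db2 x). specialize (Dc2 x).
  unfold y3 at 1. autoD2. unfold y4. field. lra.
Qed.

Lemma b_lip x : 0 <= x <= 1 -> Rabs (b x - b 0) <= M * x.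
Proof.
  intros Hx. replace (M * x) with (M * x - M * 0) by ring.
  apply (mono_bound b b1 (fun t => M * t) (fun _ => M) 0 x); try lra.
  - intros; apply Db1.
  - intros t Ht. autoD2. ring.
  - intros t Ht. apply (is_derive_cont _ _ (b1 t)); apply Db1.
  - intros t Ht. apply (is_derive_cont _ _ M). autoD2. ring.
  - intros t Ht. apply Bb1; lra.
Qed.

Lemma zexp z : 0 <= z -> z * exp (- z) <= 1.
Proof.
  intros Hz. pose proof (exp_lb1 z Hz). rewrite exp_Ropp.
  apply (Rmult_le_reg_r (exp z)); [apply exp_pos|].
  rewrite Rmult_assoc, Rinv_l by (apply Rgt_not_eq, exp_pos). lra.
Qed.

Lemma E0_le x : 0 <= x <= 1 -> E0 x * (x / eps) <= exb x / d.
Proof.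
  intros Hx. unfold E0, exb. specialize (Hbmin 0 ltac:(lra)).
  assert (A : exp (- b 0 * x / eps) <= exp (- beta * x / eps) * exp (- (d * x / eps))).
  { rewrite <- exp_plus. destruct (Req_dec (- b 0 * x / eps) (- beta * x / eps + - (d * x / eps))) as [E|E];
      [rewrite E; lra|left; apply exp_increasing].
    assert (0 <= (b 0 - beta - d) * x / eps) by (apply Rdiv_le_0_compat; [apply Rmult_le_pos|]; lra).
    assert (- b 0 * x / eps <= - beta * x / eps + - (d * x / eps)).
    { replace (- beta * x / eps + - (d * x / eps)) with (- b 0 * x / eps + (b 0 - beta - d) * x / eps) by (field; lra). lra. }
    lra. }
  assert (Z := zexp (d * x / eps) ltac:(apply Rdiv_le_0_compat; [apply Rmult_le_pos|]; lra)).
  assert (0 <= x / eps) by (apply Rdiv_le_0_compat; lra).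
  apply Rle_trans with (exp (- beta * x / eps) * exp (- (d * x / eps)) * (x / eps)).
  - apply Rmult_le_compat_r; auto.
  - replace (exp (- beta * x / eps) * exp (- (d * x / eps)) * (x / eps)) with
      (exp (- beta * x / eps) / d * (d * x / eps * exp (- (d * x / eps)))) by (field; lra).
    pose proof (exp_pos (- beta * x / eps)).
    replace (exp (- beta * x / eps) / d) with (exp (- beta * x / eps) / d * 1) at 2 by ring.
    apply Rmult_le_compat_l; auto. apply Rdiv_le_0_compat; lra.
Qed.

Lemma E0_le_ex x : 0 <= x <= 1 -> E0 x <= exb x.
Proof.
  intros Hx. unfold E0, exb. specialize (Hbmin 0 ltac:(lra)).
  assert (- b 0 * x / eps <= - beta * x / eps).
  { assert (0 <= (b 0 - beta) * x / eps) by (apply Rdiv_le_0_compat; [apply Rmult_le_pos|]; lra).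
    replace (- beta * x / eps) with (- b 0 * x / eps + (b 0 - beta) * x / eps) by (field; lra). lra. }
  destruct (Req_dec (- b 0 * x / eps) (- beta * x / eps)) as [E|E]; [rewrite E; lra|left; apply exp_increasing; lra].
Qed.

Definition CL0 := M * M / d + M.
Definition CL1 := M * CL0 + M * M + M.
Definition CL2 := M * M * CL0 + 2 * M * (M * M + M) + M * M + M.

Lemma Lam_core x : 0 <= x <= 1 -> E0 x * Rabs ((b x - b 0) * b 0 / eps + c x) <= exb x * CL0.
Proof.
  intros Hx. pose proof (E0_le x Hx). pose proof (E0_le_ex x Hx). pose proof (b_lip x Hx).
  pose proof (Bb 0 ltac:(lra)). pose proof (Bc x Hx).
  assert (E0p : 0 < E0 x) by apply exp_pos.
  assert (Rabs ((b x - b 0) * b 0 / eps) <= M * M * (x / eps)).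
  { unfold Rdiv. rewrite !Rabs_mult, Rabs_inv, (Rabs_pos_eq eps) by lra.
    replace (M * M * (x * / eps)) with ((M * x) * M * / eps) by ring.
    apply Rmult_le_compat_r; [left; apply Rinv_0_lt_compat; lra|].
    apply Rmult_le_compat; auto; apply Rabs_pos. }
  assert (Rabs ((b x - b 0) * b 0 / eps + c x) <= M * M * (x / eps) + M) by (eapply Rle_trans; [apply Rabs_triang|lra]).
  unfold CL0.
  apply Rle_trans with (E0 x * (M * M * (x / eps) + M)).
  - apply Rmult_le_compat_l; lra.
  - assert (E0 x * (M * M * (x / eps)) <= exb x * (M * M / d)).
    { replace (E0 x * (M * M * (x / eps))) with (M * M * (E0 x * (x / eps))) by ring.
      replace (exb x * (M * M / d)) with (M * M * (exb x / d)) by (field; lra).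
      apply Rmult_le_compat_l; nra. }
    assert (E0 x * M <= exb x * M) by (apply Rmult_le_compat_r; lra). nra.
Qed.

Lemma Lam_bnd x : 0 <= x <= 1 ->
  Rabs (Lam x) <= CL0 * exb x /\ Rabs (Lam1 x) <= CL1 * exb x / eps /\ Rabs (Lam2 x) <= CL2 * exb x / eps ^ 2.
Proof.
  intros Hx. pose proof (Lam_core x Hx) as LC. pose proof (E0_le_ex x Hx).
  assert (E0p : 0 < E0 x) by apply exp_pos. pose proof (ex_pos x).
  pose proof (Bb 0 ltac:(lra)). pose proof (Bb1 x Hx). pose proof (Bb2 x Hx). pose proof (Bc1 x Hx). pose proof (Bc2 x Hx).
  set (T := (b x - b 0) * b 0 / eps + c x) in *.
  assert (B0 : Rabs (b 0 / eps) <= M / eps).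
  { unfold Rdiv. rewrite Rabs_mult, Rabs_inv, (Rabs_pos_eq eps) by lra.
    apply Rmult_le_compat_r; [left; apply Rinv_0_lt_compat; lra| lra]. }
  assert (Mp : 0 < M) by lra.
  assert (ie : 1 <= / eps) by (rewrite <- Rinv_1; apply Rinv_le_contravar; lra).
  assert (Rabs (b1 x * b 0 / eps + c1 x) <= (M * M + M) / eps).
  { eapply Rle_trans; [apply Rabs_triang|].
    assert (Rabs (b1 x * b 0 / eps) <= M * (M / eps)).
    { unfold Rdiv. rewrite Rmult_assoc. apply abs_mul_le; auto. }
    assert (M <= M / eps) by (unfold Rdiv; nra).
    unfold Rdiv in *. lra. }
  assert (Rabs (b2 x * b 0 / eps + c2 x) <= (M * M + M) / eps).
  { eapply Rle_trans; [apply Rabs_triang|].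
    assert (Rabs (b2 x * b 0 / eps) <= M * (M / eps)).
    { unfold Rdiv. rewrite Rmult_assoc. apply abs_mul_le; auto. }
    assert (M <= M / eps) by (unfold Rdiv; nra).
    unfold Rdiv in *. lra. }
  split; [|split].
  - unfold Lam. fold T. rewrite Rabs_mult, (Rabs_pos_eq (E0 x)) by lra. unfold CL0 in *. lra.
  - unfold Lam1. fold T. rewrite Rabs_mult, (Rabs_pos_eq (E0 x)) by lra.
    apply Rle_trans with (E0 x * (M / eps * Rabs T + (M * M + M) / eps)).
    + apply Rmult_le_compat_l; [lra|]. eapply Rle_trans; [apply Rabs_triang|].
      rewrite Rabs_mult, Rabs_Ropp. apply Rplus_le_compat; auto.
      apply Rmult_le_compat_r; auto; apply Rabs_pos.
    + unfold CL1. replace (E0 x * (M / eps * Rabs T + (M * M + M) / eps)) with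
        ((M * (E0 x * Rabs T) + E0 x * (M * M + M)) / eps) by (field; lra).
      replace ((M * CL0 + M * M + M) * exb x / eps) with ((M * (exb x * CL0) + exb x * (M * M + M)) / eps) by (field; lra).
      unfold Rdiv. apply Rmult_le_compat_r; [left; apply Rinv_0_lt_compat; lra|].
      apply Rplus_le_compat; [apply Rmult_le_compat_l; lra|apply Rmult_le_compat_r; nra].
  - unfold Lam2. fold T. rewrite Rabs_mult, (Rabs_pos_eq (E0 x)) by lra.
    apply Rle_trans with (E0 x * ((M / eps) ^ 2 * Rabs T + 2 * (M / eps) * ((M * M + M) / eps) + (M * M + M) / eps)).
    + apply Rmult_le_compat_l; [lra|]. eapply Rle_trans; [apply Rabs_triang|].
      apply Rplus_le_compat; auto.
      unfold Rminus. eapply Rle_trans; [apply Rabs_triang|]. rewrite Rabs_Ropp.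
      apply Rplus_le_compat.
      * rewrite Rabs_mult, <- RPow_abs. apply Rmult_le_compat_r; [apply Rabs_pos|].
        apply pow_incr. split; [apply Rabs_pos|auto].
      * rewrite !Rabs_mult, (Rabs_pos_eq 2) by lra.
        apply Rmult_le_compat; [apply Rmult_le_pos; [lra|apply Rabs_pos]|apply Rabs_pos|apply Rmult_le_compat_l; lra|auto].
    + assert (ie2 : / eps <= / eps ^ 2).
      { apply Rinv_le_contravar; [apply pow_lt; lra|]. simpl. nra. }
      unfold CL2.
      replace (E0 x * ((M / eps) ^ 2 * Rabs T + 2 * (M / eps) * ((M * M + M) / eps) + (M * M + M) / eps)) with
        ((M * M * (E0 x * Rabs T) + 2 * M * (M * M + M) * E0 x + (M * M + M) * E0 x * eps) / eps ^ 2) by (field; lra).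
      replace ((M * M * CL0 + 2 * M * (M * M + M) + M * M + M) * exb x / eps ^ 2) with
        ((M * M * (exb x * CL0) + 2 * M * (M * M + M) * exb x + (M * M + M) * exb x) / eps ^ 2) by (field; lra).
      unfold Rdiv. apply Rmult_le_compat_r; [left; apply Rinv_0_lt_compat, pow_lt; lra|].
      assert (M * M * (E0 x * Rabs T) <= M * M * (exb x * CL0)) by (apply Rmult_le_compat_l; nra).
      assert (2 * M * (M * M + M) * E0 x <= 2 * M * (M * M + M) * exb x) by (apply Rmult_le_compat_l; nra).
      assert (PP : 0 <= M * M + M) by nra.
      assert ((M * M + M) * E0 x * eps <= (M * M + M) * E0 x) by (rewrite <- (Rmult_1_r ((M * M + M) * E0 x)) at 2; apply Rmult_le_compat_l; [apply Rmult_le_pos; lra|lra]).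
      assert ((M * M + M) * E0 x <= (M * M + M) * exb x) by (apply Rmult_le_compat_l; lra).
      lra.
Qed.

Definition Kvm := (Cpsi + M * K0) / beta.

Lemma Kv_bnd : Rabs Kv <= Kvm.
Proof.
  pose proof Psi0_bnd as P. pose proof (u0_bnd 0 ltac:(lra)) as U. pose proof (Bb 0 ltac:(lra)).
  unfold Kv, Kvm. rewrite Rabs_Ropp. apply abs_div_b; auto. specialize (Hbmin 0 ltac:(lra)); lra.
  replace (eps * Derive u 0) with ((eps * Derive u 0 - b 0 * u0 0) + b 0 * u0 0) by ring.
  eapply Rle_trans; [apply abs_add_le; [exact P|apply abs_mul_le; eassumption]|].
  assert (0 <= Cpsi).
  { pose proof (Rabs_pos (eps * Derive u 0 - b 0 * u0 0)). assert (0 <= eps * Cpsi) by lra. nra. }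
  nra.
Qed.

Lemma y0_bnd : Rabs (yf 0) <= eps * Cpsi / beta.
Proof.
  pose proof Psi0_bnd as P. pose proof (bpos 0 ltac:(lra)).
  assert (E : yf 0 = (eps * Derive u 0 - b 0 * u0 0) / b 0).
  { unfold yf, vf, Kv, E0. rewrite Hu00. replace (- b 0 * 0 / eps) with 0 by (field; lra). rewrite exp_0. field. lra. }
  rewrite E. apply abs_div_b; auto. specialize (Hbmin 0 ltac:(lra)); lra.
Qed.

Lemma y1_end : Rabs (yf 1) <= Kvm * eps / beta.
Proof.
  pose proof Kv_bnd. pose proof (bpos 1 ltac:(lra)) as B.
  assert (E : yf 1 = - (Kv * E0 1)) by (unfold yf, vf; rewrite Hu1, Hu01; ring).
  rewrite E, Rabs_Ropp, Rabs_mult, (Rabs_pos_eq (E0 1)) by (left; apply exp_pos).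
  assert (H0 : beta + d <= b 0) by (apply Hbmin; lra).
  assert (E0 1 <= eps / beta).
  { unfold E0. replace (- b 0 * 1 / eps) with (- (b 0 / eps)) by (field; lra).
    assert (0 < b 0 / eps) by (apply Rdiv_lt_0_compat; lra).
    pose proof (zexp (b 0 / eps) ltac:(lra)).
    apply (Rmult_le_reg_l (b 0 / eps)); auto.
    replace (b 0 / eps * (eps / beta)) with (b 0 / beta) by (field; lra).
    assert (1 <= b 0 / beta) by (apply (Rmult_le_reg_r beta); auto; unfold Rdiv; rewrite Rmult_assoc, Rinv_l by lra; lra).
    lra. }
  assert (0 <= Rabs Kv) by apply Rabs_pos.
  replace (Kvm * eps / beta) with (Kvm * (eps / beta)) by (field; lra).
  apply Rmult_le_compat; auto. left; apply exp_pos.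
Qed.

Definition A0 := (K2 + Kvm * CL0 / d + Cpsi + Kvm) / beta + 1.

Lemma consts_pos : 0 <= Cpsi /\ 0 <= Kvm /\ 0 <= CL0 /\ 0 <= CL1 /\ 0 <= CL2 /\ 1 <= A0.
Proof.
  assert (KF := K_facts).
  assert (Awp : 1 <= Aw) by (unfold Aw; assert (0 <= K2/beta) by (apply Rdiv_le_0_compat; lra); lra).
  assert (0 <= Cpsi).
  { unfold Cpsi, Gm, Ku. assert (0 <= M / beta) by (apply Rdiv_le_0_compat; lra).
    assert (0 <= 1 / beta) by (apply Rdiv_le_0_compat; lra).
    assert (0 <= 2 * M * (2 * Aw + K0)) by (apply Rmult_le_pos; lra). nra. }
  assert (0 <= Kvm) by (unfold Kvm; apply Rdiv_le_0_compat; nra).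
  assert (0 <= CL0) by (unfold CL0; assert (0 <= M * M / d) by (apply Rdiv_le_0_compat; nra); nra).
  assert (0 <= CL1) by (unfold CL1; nra).
  assert (0 <= CL2) by (unfold CL2; assert (0 <= M * M) by nra; nra).
  assert (1 <= A0).
  { unfold A0. assert (0 <= Kvm * CL0 / d) by (apply Rdiv_le_0_compat; nra).
    assert (0 <= (K2 + Kvm * CL0 / d + Cpsi + Kvm) / beta) by (apply Rdiv_le_0_compat; lra). lra. }
  tauto.
Qed.

Lemma g_bnd x : 0 <= x <= 1 -> Rabs (gf x) <= K2 * eps + Kvm * CL0 * exb x.
Proof.
  intros Hx. pose proof (P_bnd x Hx) as [_ [PB _]]. pose proof (Lam_bnd x Hx) as [LB _].
  pose proof Kv_bnd as KB. unfold gf.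
  eapply Rle_trans; [eapply abs_sub_le; [eapply abs_mul_le; [apply abs_const; lra|exact PB]|eapply abs_mul_le; [exact KB|exact LB]]|].
  nra.
Qed.

Lemma yf_bnd : forall x, 0 <= x <= 1 -> Rabs (yf x) <= 3 * A0 * eps.
Proof.
  destruct consts_pos as [Cp [Kp [L0 [_ [_ A0p]]]]].
  assert (HA1 : beta * A0 >= K2 + Kvm * CL0 / d + Cpsi + Kvm).
  { unfold A0. replace (beta * ((K2 + Kvm * CL0 / d + Cpsi + Kvm) / beta + 1)) with (K2 + Kvm * CL0 / d + Cpsi + Kvm + beta) by (field; lra). lra. }
  assert (HA2 : beta * A0 * d >= Kvm * CL0).
  { assert (beta * A0 >= Kvm * CL0 / d) by (assert (0 <= Cpsi + Kvm + K2) by (pose proof K_facts; lra); lra).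
    apply Rmult_ge_compat_r with (r := d) in H; [|lra]. replace (Kvm * CL0 / d * d) with (Kvm * CL0) in H by (field; lra). lra. }
  assert (key : forall s, (s = 1 \/ s = -1) -> forall x, 0 <= x <= 1 ->
    0 <= A0 * eps * (2 - x) + A0 * eps * exb x - s * yf x).
  { intros s Hs.
    apply (max_princ eps b c
      (fun x => A0 * eps * (2 - x) + A0 * eps * exb x - s * yf x)
      (fun x => - A0 * eps + A0 * eps * (- (beta / eps) * exb x) - s * y1 x)
      (fun x => A0 * eps * ((beta / eps) ^ 2 * exb x) - s * y2 x)); try lra.
    - intros x Hx; apply Hcpos; lra.
    - intros x Hx. apply (is_derive_cont _ _ (- A0 * eps + A0 * eps * (- (beta / eps) * exb x) - s * y1 x)).
      pose proof (dyf x). pose proof (d_ex x). autoD2. ring.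
    - intros x Hx. pose proof (dyf x). pose proof (d_ex x). autoD2. ring.
    - intros x Hx. pose proof (dy1 x). pose proof (d_ex x). autoD2. field. lra.
    - intros x Hx. pose proof (yode x Hx) as Y.
      match goal with |- 0 < ?e => replace e with
        (A0 * eps * b x + A0 * beta * exb x * (b x - beta) + c x * (A0 * eps * (2 - x) + A0 * eps * exb x) - s * gf x) end.
      2:{ apply (Rmult_eq_reg_l eps); [|lra]. 
          replace (eps * (- eps * (A0 * eps * ((beta / eps) ^ 2 * exb x) - s * y2 x) - b x * (- A0 * eps + A0 * eps * (- (beta / eps) * exb x) - s * y1 x) + c x * (A0 * eps * (2 - x) + A0 * eps * exb x - s * yf x)))
            with (eps * (A0 * eps * b x + A0 * beta * exb x * (b x - beta) + c x * (A0 * eps * (2 - x) + A0 * eps * exb x)) + s * eps * (eps * y2 x + b x * y1 x - c x * yf x)) by (field; lra).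
          rewrite Y. ring. }
      pose proof (g_bnd x ltac:(lra)) as G. apply Rabs_le_between in G.
      specialize (Hbmin x ltac:(lra)). specialize (Hcpos x ltac:(lra)). pose proof (ex_pos x).
      assert (0 <= c x * (A0 * eps * (2 - x) + A0 * eps * exb x)).
      { apply Rmult_le_pos; auto. assert (0 < A0 * eps) by nra. nra. }
      assert (A0 * eps * b x >= A0 * eps * beta + A0 * eps * d) by (assert (0 < A0 * eps) by nra; nra).
      assert (A0 * beta * exb x * (b x - beta) >= A0 * beta * d * exb x) by (assert (0 < A0 * beta * exb x) by (apply Rmult_lt_0_compat; nra); nra).
      assert (HK2 : beta * A0 >= K2) by (assert (0 <= Kvm*CL0/d) by (apply Rdiv_le_0_compat; nra); lra).
      assert (A0 * eps * beta >= K2 * eps) by (assert (0 <= (beta * A0 - K2) * eps) by (apply Rmult_le_pos; lra); nra).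
      assert (A0 * beta * d * exb x >= Kvm * CL0 * exb x) by (assert (0 <= (beta * A0 * d - Kvm * CL0) * exb x) by (apply Rmult_le_pos; lra); nra).
      assert (0 < A0 * eps * d) by (apply Rmult_lt_0_compat; nra).
      destruct Hs; subst s; lra.
    - pose proof y0_bnd as Y. unfold exb. replace (- beta * 0 / eps) with 0 by (field; lra). rewrite exp_0.
      apply Rabs_le_between in Y.
      assert (eps * Cpsi / beta <= A0 * eps).
      { replace (eps * Cpsi / beta) with (eps * (Cpsi / beta)) by (field; lra).
        rewrite (Rmult_comm A0). apply Rmult_le_compat_l; [lra|].
        apply (Rmult_le_reg_l beta); auto. replace (beta * (Cpsi / beta)) with Cpsi by (field; lra).
        assert (0 <= K2 + Kvm * CL0 / d) by (pose proof K_facts; assert (0 <= Kvm * CL0 / d) by (apply Rdiv_le_0_compat; nra); lra). lra. }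
      destruct Hs; subst s; nra.
    - pose proof y1_end as Y. pose proof (ex_pos 1). apply Rabs_le_between in Y.
      assert (Kvm * eps / beta <= A0 * eps).
      { replace (Kvm * eps / beta) with (eps * (Kvm / beta)) by (field; lra).
        rewrite (Rmult_comm A0). apply Rmult_le_compat_l; [lra|].
        apply (Rmult_le_reg_l beta); auto. replace (beta * (Kvm / beta)) with Kvm by (field; lra).
        assert (0 <= K2 + Kvm * CL0 / d) by (pose proof K_facts; assert (0 <= Kvm * CL0 / d) by (apply Rdiv_le_0_compat; nra); lra). lra. }
      assert (0 < A0 * eps * exb 1) by (apply Rmult_lt_0_compat; nra).
      destruct Hs; subst s; nra. }
  intros x Hx. pose proof (key 1 (or_introl eq_refl) x Hx). pose proof (key (-1) (or_intror eq_refl) x Hx).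
  pose proof (ex_le1 x ltac:(lra)). pose proof (ex_pos x).
  assert (A0 * eps * exb x <= A0 * eps) by (assert (0 < A0 * eps) by nra; nra).
  assert (0 <= A0 * eps * x) by (apply Rmult_le_pos; nra).
  apply Rabs_le. nra.
Qed.

Lemma fc_gen (z dz Rf : R -> R) (A C1 C2 : R) (k : nat) x0 x :
  0 <= x0 <= x -> x < 1 ->
  (forall t, x0 <= t <= x -> continuity_pt z t) ->
  (forall t, x0 < t <= x -> is_derive z t (dz t)) ->
  (forall t, x0 < t <= x -> eps * dz t = - b t * z t + Rf t) ->
  (forall t, x0 < t <= x -> Rabs (Rf t) <= C1 * eps + C2 * (exb t / eps ^ k)) ->
  C1 <= A * beta -> C2 <= A * d -> 0 < A ->
  Rabs (z x0) <= A * (eps + exb x0 / eps ^ k) ->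
  Rabs (z x) <= A * (eps + exb x / eps ^ k).
Proof.
  intros Hx Hx1 Hc Hdz Hz HR H1 H2 HA H0.
  assert (ek : 0 < eps ^ k) by (apply pow_lt; lra).
  assert (key : forall s, (s = 1 \/ s = -1) -> s * z x - A * (eps + exb x / eps ^ k) <= 0).
  { intros s Hs.
    apply (fc_fwd (fun t => s * z t - A * (eps + exb t / eps ^ k))
       (fun t => s * dz t - A * (- (beta / eps) * exb t / eps ^ k)) x0 x); try lra.
    - intros t Ht. apply continuity_pt_minus.
      + apply continuity_pt_mult; [apply continuity_pt_const; intros ??; auto|apply Hc; auto].
      + apply (is_derive_cont _ _ (A * (- (beta / eps) * exb t / eps ^ k))). pose proof (d_ex t). autoD2. field. lra.
    - intros t Ht. pose proof (d_ex t). specialize (Hdz t Ht). autoD2. field. lra.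
    - simpl. apply Rabs_le_between in H0. destruct Hs; subst s; lra.
    - intros t Ht Hq. simpl in Hq.
      specialize (HR t Ht). specialize (Hz t Ht). apply Rabs_le_between in HR.
      specialize (Hbmin t ltac:(lra)).
      set (W := exb t / eps ^ k) in *.
      assert (W0 : 0 <= W) by (unfold W; apply Rdiv_le_0_compat; [left; apply ex_pos|lra]).
      assert (E : eps * (s * dz t - A * (- (beta / eps) * exb t / eps ^ k)) = s * (- b t * z t + Rf t) + A * beta * W).
      { rewrite <- Hz. unfold W. field. lra. }
      apply (Rmult_lt_reg_l eps); [lra|]. rewrite E. rewrite Rmult_0_r.
      assert (Q : b t * (s * z t) >= b t * (A * (eps + W))) by (apply Rmult_ge_compat_l; lra).
      replace (s * (- b t * z t + Rf t)) with (- (b t * (s * z t)) + s * Rf t) by ring.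
      assert (s * Rf t <= C1 * eps + C2 * W) by (destruct Hs; subst s; lra).
      assert (b t * (A * (eps + W)) >= beta * A * eps + d * A * eps + beta * A * W + d * A * W).
      { assert (0 <= A * (eps + W)) by (apply Rmult_le_pos; lra).
        assert (b t * (A * (eps + W)) >= (beta + d) * (A * (eps + W))) by (apply Rmult_ge_compat_r; lra).
        lra. }
      assert (C1 * eps <= A * beta * eps) by (apply Rmult_le_compat_r; lra).
      assert (C2 * W <= A * d * W) by (apply Rmult_le_compat_r; lra).
      assert (0 < d * A * eps) by (apply Rmult_lt_0_compat; [apply Rmult_lt_0_compat|]; lra).
      nra. }
  pose proof (key 1 (or_introl eq_refl)). pose proof (key (-1) (or_intror eq_refl)).
  apply Rabs_le. lra.
Qed.

Definition A1 := (3 * M * A0 + K2) / beta + Kvm * CL0 / d + K1 + 1.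

Lemma y1_bnd : forall x, 0 <= x < 1 -> Rabs (y1 x) <= A1 * (eps + exb x).
Proof.
  destruct consts_pos as [Cp [Kp [L0 [_ [_ A0p]]]]]. assert (KF := K_facts).
  assert (A1p : 1 <= A1).
  { unfold A1. assert (0 <= (3 * M * A0 + K2) / beta) by (apply Rdiv_le_0_compat; nra).
    assert (0 <= Kvm * CL0 / d) by (apply Rdiv_le_0_compat; nra). lra. }
  intros x Hx.
  replace (exb x) with (exb x / eps ^ 0) by (simpl; field).
  apply (fc_gen y1 y2 (fun t => c t * yf t - gf t) A1 (3 * M * A0 + K2) (Kvm * CL0) 0 0 x); try lra.
  - intros t Ht. apply (is_derive_cont _ _ (y2 t)). apply dy1.
  - intros t Ht. apply dy1.
  - intros t Ht. rewrite yode by lra. ring.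
  - intros t Ht. simpl. replace (exb t / 1) with (exb t) by field.
    eapply Rle_trans; [apply abs_sub_le; [apply abs_mul_le; [apply Bc; lra|apply yf_bnd; lra]|apply g_bnd; lra]|].
    lra.
  - unfold A1. replace (((3 * M * A0 + K2) / beta + Kvm * CL0 / d + K1 + 1) * beta) with
      (3 * M * A0 + K2 + (Kvm * CL0 / d + K1 + 1) * beta) by (field; lra).
    assert (0 <= Kvm * CL0 / d) by (apply Rdiv_le_0_compat; nra).
    assert (0 <= (Kvm * CL0 / d + K1 + 1) * beta) by (apply Rmult_le_pos; lra). lra.
  - unfold A1. replace (((3 * M * A0 + K2) / beta + Kvm * CL0 / d + K1 + 1) * d) with
      (Kvm * CL0 + ((3 * M * A0 + K2) / beta + K1 + 1) * d) by (field; lra).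
    assert (0 <= (3 * M * A0 + K2) / beta) by (apply Rdiv_le_0_compat; nra).
    assert (0 <= ((3 * M * A0 + K2) / beta + K1 + 1) * d) by (apply Rmult_le_pos; lra). lra.
  - assert (E : y1 0 = - Derive u0 0).
    { unfold y1, Kv, E0. replace (- b 0 * 0 / eps) with 0 by (field; lra). rewrite exp_0.
      pose proof (bpos 0 ltac:(lra)). field. lra. }
    rewrite E, Rabs_Ropp, D1u0_0. pose proof (P_bnd 0 ltac:(lra)) as [PB _].
    unfold exb. replace (- beta * 0 / eps) with 0 by (field; lra). rewrite exp_0. simpl.
    replace (eps + 1 / 1) with (eps + 1) by field.
    assert (K1 <= A1).
    { unfold A1. assert (0 <= (3 * M * A0 + K2) / beta) by (apply Rdiv_le_0_compat; nra).
      assert (0 <= Kvm * CL0 / d) by (apply Rdiv_le_0_compat; nra). lra. }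
    nra.
Qed.

Lemma ex_half t : 0 <= t <= eps / (2 * beta) -> 1 / 2 <= exb t.
Proof.
  intros Ht.
  assert (H12 : exp (1 / 2) < 2).
  { assert (exp (1/2) * exp (1/2) = exp 1) by (rewrite <- exp_plus; f_equal; field).
    pose proof exp_le_3. pose proof (exp_pos (1/2)). nra. }
  assert (exp (- (1 / 2)) > 1 / 2).
  { rewrite exp_Ropp. pose proof (exp_pos (1/2)).
    apply (Rmult_lt_reg_l (exp (1/2))); auto. rewrite Rinv_r by lra. lra. }
  unfold exb. assert (- (1 / 2) <= - beta * t / eps).
  { assert (beta * t / eps <= 1 / 2).
    { apply (Rmult_le_reg_l (2 * beta / eps)). apply Rdiv_lt_0_compat; lra.
      replace (2 * beta / eps * (beta * t / eps)) with (beta * (2 * beta / eps * t / eps)) by (field; lra).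
      assert (2 * beta / eps * t <= 1).
      { apply (Rmult_le_reg_l (eps / (2 * beta))). apply Rdiv_lt_0_compat; lra.
        replace (eps / (2 * beta) * (2 * beta / eps * t)) with t by (field; lra). lra. }
      assert (0 <= 2 * beta / eps * t) by (apply Rmult_le_pos; [apply Rdiv_le_0_compat|]; lra).
      assert (2 * beta / eps * t / eps <= 1 / eps) by (apply Rmult_le_compat_r; [left; apply Rinv_0_lt_compat|]; lra).
      replace (2 * beta / eps * (1 / 2)) with (beta * (1 / eps)) by (field; lra).
      apply Rmult_le_compat_l; lra. }
    replace (- beta * t / eps) with (- (beta * t / eps)) by (field; lra). lra. }
  destruct (Req_dec (- (1/2)) (- beta * t / eps)) as [E|E]; [rewrite <- E; lra|].
  assert (exp (- (1/2)) < exp (- beta * t / eps)) by (apply exp_increasing; lra). lra.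
Qed.

Lemma fc_thr (z dz Rf : R -> R) (A C1 C2 Cp : R) (k : nat) :
  (forall t, 0 < t < 1 -> is_derive z t (dz t)) ->
  (forall t, 0 < t < 1 -> eps * dz t = - b t * z t + Rf t) ->
  (forall t, 0 < t < 1 -> Rabs (Rf t) <= C1 * eps + C2 * (exb t / eps ^ k)) ->
  (forall t, 0 < t < 1 -> Rabs (z t) <= Cp / eps ^ k) ->
  C1 <= A * beta -> C2 <= A * d -> 0 < A -> 2 * Cp <= A ->
  forall x, 0 < x < 1 -> Rabs (z x) <= A * (eps + exb x / eps ^ k).
Proof.
  intros Hdz Hz HR Hp H1 H2 HA HC x Hx.
  assert (ek : 0 < eps ^ k) by (apply pow_lt; lra).
  assert (thr : forall t, 0 < t < 1 -> t <= eps / (2 * beta) -> Rabs (z t) <= A * (eps + exb t / eps ^ k)).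
  { intros t Ht Ht2. pose proof (ex_half t ltac:(lra)). specialize (Hp t Ht).
    assert (Cp / eps ^ k <= A * (exb t / eps ^ k)).
    { unfold Rdiv. rewrite <- Rmult_assoc. apply Rmult_le_compat_r; [left; apply Rinv_0_lt_compat; lra|].
      assert (0 <= Cp) by (pose proof (Rabs_pos (z t)); assert (0 <= Cp / eps ^ k) by lra;
        apply Rmult_le_reg_r with (/ eps ^ k); [apply Rinv_0_lt_compat; lra|]; lra).
      nra. }
    assert (0 <= A * eps) by nra. nra. }
  destruct (Rle_dec x (eps / (2 * beta))) as [Hle|Hgt]; [apply thr; auto|].
  assert (t0p : 0 < eps / (2 * beta)) by (apply Rdiv_lt_0_compat; lra).
  apply (fc_gen z dz Rf A C1 C2 k (eps / (2 * beta)) x); try lra.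
  - intros t Ht. apply (is_derive_cont _ _ (dz t)). apply Hdz. lra.
  - intros t Ht. apply Hdz. lra.
  - intros t Ht. apply Hz. lra.
  - intros t Ht. apply HR. lra.
  - apply thr; lra.
Qed.

Lemma exs x : 0 <= x -> exb x <= exb x / eps /\ exb x / eps <= exb x / eps ^ 2 /\ exb x / eps ^ 2 <= exb x / eps ^ 3
  /\ exb x <= 1 /\ 0 < exb x.
Proof.
  intros Hx. pose proof (ex_pos x). pose proof (ex_le1 x Hx).
  assert (ie : 1 <= / eps) by (rewrite <- Rinv_1; apply Rinv_le_contravar; lra).
  assert (A : forall y, 0 < y -> y <= y / eps) by (intros y Hy; unfold Rdiv; nra).
  assert (E2 : exb x / eps ^ 2 = exb x / eps / eps) by (field; lra).
  assert (E3 : exb x / eps ^ 3 = exb x / eps ^ 2 / eps) by (field; lra).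
  assert (0 < exb x / eps) by (apply Rdiv_lt_0_compat; lra).
  assert (0 < exb x / eps ^ 2) by (apply Rdiv_lt_0_compat; [lra|apply pow_lt; lra]).
  repeat split; try lra.
  - apply A; lra.
  - rewrite E2. apply A; lra.
  - rewrite E3. apply A; lra.
Qed.

Definition Cp2 := 2 * M * A1 + 3 * M * A0 + K2 + Kvm * CL0.
Definition A2 := 2 * Cp2 + (2 * M * A1 + 3 * M * A0 + K3) / beta + (2 * M * A1 + Kvm * CL1) / d + 1.

Lemma consts_pos2 : 1 <= A1 /\ 0 <= Cp2 /\ 1 <= A2.
Proof.
  destruct consts_pos as [Cp [Kp [L0 [L1 [_ A0p]]]]]. assert (KF := K_facts).
  assert (A1p : 1 <= A1).
  { unfold A1. assert (0 <= (3 * M * A0 + K2) / beta) by (apply Rdiv_le_0_compat; nra).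
    assert (0 <= Kvm * CL0 / d) by (apply Rdiv_le_0_compat; nra). lra. }
  assert (0 <= Cp2) by (unfold Cp2; nra).
  assert (1 <= A2).
  { unfold A2. assert (0 <= (2 * M * A1 + 3 * M * A0 + K3) / beta) by (apply Rdiv_le_0_compat; nra).
    assert (0 <= (2 * M * A1 + Kvm * CL1) / d) by (apply Rdiv_le_0_compat; nra). lra. }
  tauto.
Qed.

Lemma y2_pri t : 0 < t < 1 -> Rabs (y2 t) <= Cp2 / eps.
Proof.
  intros Ht. destruct consts_pos as [Cp [Kp [L0 [L1 [_ A0p]]]]]. assert (KF := K_facts).
  destruct consts_pos2 as [A1p [Cp2p A2p]].
  pose proof (yode t Ht) as Y. pose proof (exs t ltac:(lra)) as [_ [_ [_ [X1 X0]]]].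
  assert (E : y2 t = (- b t * y1 t + c t * yf t - gf t) / eps) by (rewrite <- Y; field; lra).
  rewrite E. apply abs_div_b; [lra|lra|].
  pose proof (Bb t ltac:(lra)). pose proof (Bc t ltac:(lra)). pose proof (y1_bnd t ltac:(lra)).
  pose proof (yf_bnd t ltac:(lra)). pose proof (g_bnd t ltac:(lra)).
  assert (Rabs (- b t) <= M) by (rewrite Rabs_Ropp; auto).
  eapply Rle_trans; [bt|]. unfold Cp2.
  assert (M * (A1 * (eps + exb t)) <= 2 * M * A1) by (assert (0 <= M * A1) by nra; nra).
  assert (M * (3 * A0 * eps) <= 3 * M * A0) by (assert (0 <= M * A0) by nra; nra).
  assert (K2 * eps + Kvm * CL0 * exb t <= K2 + Kvm * CL0) by (assert (0 <= Kvm * CL0) by nra; nra).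
  lra.
Qed.

Lemma y2_bnd : forall x, 0 < x < 1 -> Rabs (y2 x) <= A2 * (eps + exb x / eps ^ 1).
Proof.
  destruct consts_pos as [Cp [Kp [L0 [L1 [_ A0p]]]]]. assert (KF := K_facts).
  destruct consts_pos2 as [A1p [Cp2p A2p]].
  apply (fc_thr y2 y3 (fun t => - b1 t * y1 t + c1 t * yf t + c t * y1 t - g1 t) A2
    (2 * M * A1 + 3 * M * A0 + K3) (2 * M * A1 + Kvm * CL1) Cp2 1); try lra.
  - intros t Ht. apply dy2; auto.
  - intros t Ht. unfold y3. field. lra.
  - intros t Ht. pose proof (exs t ltac:(lra)) as [X01 [_ [_ [X1 X0]]]].
    pose proof (Bb1 t ltac:(lra)). pose proof (Bc1 t ltac:(lra)). pose proof (Bc t ltac:(lra)).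
    pose proof (y1_bnd t ltac:(lra)). pose proof (yf_bnd t ltac:(lra)).
    assert (Rabs (g1 t) <= K3 * eps + Kvm * (CL1 * exb t / eps)).
    { pose proof (P_bnd t ltac:(lra)) as [_ [_ [PB _]]]. pose proof (Lam_bnd t ltac:(lra)) as [_ [LB _]].
      pose proof Kv_bnd as KB. unfold g1.
      eapply Rle_trans; [eapply abs_sub_le; [eapply abs_mul_le; [apply abs_const; lra|exact PB]|eapply abs_mul_le; [exact KB|exact LB]]|].
      nra. }
    assert (Rabs (- b1 t) <= M) by (rewrite Rabs_Ropp; auto).
    eapply Rle_trans; [bt|]. rewrite pow_1.
    replace (Kvm * (CL1 * exb t / eps)) with (Kvm * CL1 * (exb t / eps)) by (field; lra).
    assert (M * (A1 * (eps + exb t)) <= M * A1 * eps + M * A1 * (exb t / eps)) by (assert (0 <= M * A1) by nra; nra).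
    assert (M * (3 * A0 * eps) = 3 * M * A0 * eps) by ring.
    lra.
  - intros t Ht. rewrite pow_1. apply y2_pri; auto.
  - unfold A2. replace ((2 * Cp2 + (2 * M * A1 + 3 * M * A0 + K3) / beta + (2 * M * A1 + Kvm * CL1) / d + 1) * beta) with
      (2 * M * A1 + 3 * M * A0 + K3 + (2 * Cp2 + (2 * M * A1 + Kvm * CL1) / d + 1) * beta) by (field; lra).
    assert (0 <= (2 * M * A1 + Kvm * CL1) / d) by (apply Rdiv_le_0_compat; nra).
    assert (0 <= (2 * Cp2 + (2 * M * A1 + Kvm * CL1) / d + 1) * beta) by (apply Rmult_le_pos; lra). lra.
  - unfold A2. replace ((2 * Cp2 + (2 * M * A1 + 3 * M * A0 + K3) / beta + (2 * M * A1 + Kvm * CL1) / d + 1) * d) with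
      (2 * M * A1 + Kvm * CL1 + (2 * Cp2 + (2 * M * A1 + 3 * M * A0 + K3) / beta + 1) * d) by (field; lra).
    assert (0 <= (2 * M * A1 + 3 * M * A0 + K3) / beta) by (apply Rdiv_le_0_compat; nra).
    assert (0 <= (2 * Cp2 + (2 * M * A1 + 3 * M * A0 + K3) / beta + 1) * d) by (apply Rmult_le_pos; lra). lra.
  - unfold A2. assert (0 <= (2 * M * A1 + 3 * M * A0 + K3) / beta) by (apply Rdiv_le_0_compat; nra).
    assert (0 <= (2 * M * A1 + Kvm * CL1) / d) by (apply Rdiv_le_0_compat; nra). lra.
Qed.

Definition Cp3 := 4 * M * A1 + 3 * M * A0 + M * Cp2 + K3 + Kvm * CL1.
Definition A3 := 2 * Cp3 + (3 * M * A1 + 3 * M * A2 + 3 * M * A0 + K4) / beta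
   + (3 * M * A1 + 3 * M * A2 + Kvm * CL2) / d + 1.
Definition A4 := 3 * M * A1 + 3 * M * A2 + 3 * M * A0 + K4 + Kvm * CL2 + M * A3.

Lemma g1_bnd t : 0 <= t <= 1 -> Rabs (g1 t) <= K3 * eps + Kvm * CL1 * (exb t / eps).
Proof.
  intros Ht. pose proof (P_bnd t Ht) as [_ [_ [PB _]]]. pose proof (Lam_bnd t Ht) as [_ [LB _]].
  pose proof Kv_bnd as KB. destruct consts_pos as [Cp [Kp _]]. unfold g1.
  eapply Rle_trans; [eapply abs_sub_le; [eapply abs_mul_le; [apply abs_const; lra|exact PB]|eapply abs_mul_le; [exact KB|exact LB]]|].
  replace (Kvm * (CL1 * exb t / eps)) with (Kvm * CL1 * (exb t / eps)) by (field; lra). nra.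
Qed.

Lemma g2_bnd t : 0 <= t <= 1 -> Rabs (g2 t) <= K4 * eps + Kvm * CL2 * (exb t / eps ^ 2).
Proof.
  intros Ht. pose proof (P_bnd t Ht) as [_ [_ [_ PB]]]. pose proof (Lam_bnd t Ht) as [_ [_ LB]].
  pose proof Kv_bnd as KB. destruct consts_pos as [Cp [Kp _]]. unfold g2.
  eapply Rle_trans; [eapply abs_sub_le; [eapply abs_mul_le; [apply abs_const; lra|exact PB]|eapply abs_mul_le; [exact KB|exact LB]]|].
  assert (0 < eps ^ 2) by (apply pow_lt; lra).
  replace (Kvm * (CL2 * exb t / eps ^ 2)) with (Kvm * CL2 * (exb t / eps ^ 2)) by (field; lra). nra.
Qed.

Lemma consts_pos3 : 0 <= Cp3 /\ 1 <= A3 /\ 0 <= A4.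
Proof.
  destruct consts_pos as [Cp [Kp [L0 [L1 [L2 A0p]]]]]. assert (KF := K_facts).
  destruct consts_pos2 as [A1p [Cp2p A2p]].
  assert (0 <= Cp3) by (unfold Cp3; nra).
  assert (1 <= A3).
  { unfold A3. assert (0 <= (3 * M * A1 + 3 * M * A2 + 3 * M * A0 + K4) / beta) by (apply Rdiv_le_0_compat; nra).
    assert (0 <= (3 * M * A1 + 3 * M * A2 + Kvm * CL2) / d) by (apply Rdiv_le_0_compat; nra). lra. }
  assert (0 <= A4) by (unfold A4; nra).
  tauto.
Qed.

Lemma y3_pri t : 0 < t < 1 -> Rabs (y3 t) <= Cp3 / eps ^ 2.
Proof.
  intros Ht. destruct consts_pos as [Cp [Kp [L0 [L1 [_ A0p]]]]]. assert (KF := K_facts).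
  destruct consts_pos2 as [A1p [Cp2p A2p]].
  pose proof (exs t ltac:(lra)) as [X01 [_ [_ [X1 X0]]]].
  replace (Cp3 / eps ^ 2) with (Cp3 / eps / eps) by (field; lra).
  unfold y3. apply abs_div_b; [lra|lra|].
  pose proof (Bb t ltac:(lra)). pose proof (Bc t ltac:(lra)). pose proof (Bb1 t ltac:(lra)). pose proof (Bc1 t ltac:(lra)).
  pose proof (y1_bnd t ltac:(lra)). pose proof (y2_pri t Ht). pose proof (yf_bnd t ltac:(lra)). pose proof (g1_bnd t ltac:(lra)).
  assert (Rabs (- b1 t) <= M) by (rewrite Rabs_Ropp; auto).
  eapply Rle_trans; [bt|]. unfold Cp3.
  assert (ie : 1 <= / eps) by (rewrite <- Rinv_1; apply Rinv_le_contravar; lra).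
  assert (Hd1 : forall q, 0 <= q -> q <= q / eps) by (intros q Hq; unfold Rdiv; nra).
  assert (M * (A1 * (eps + exb t)) <= 2 * M * A1) by (assert (0 <= M * A1) by nra; nra).
  assert (M * (3 * A0 * eps) <= 3 * M * A0) by (assert (0 <= M * A0) by nra; nra).
  assert (K3 * eps + Kvm * CL1 * (exb t / eps) <= (K3 + Kvm * CL1) / eps).
  { replace ((K3 + Kvm * CL1) / eps) with (K3 / eps + Kvm * CL1 * (1 / eps)) by (field; lra).
    assert (K3 * eps <= K3 / eps) by (pose proof (Hd1 K3 ltac:(lra)); nra).
    assert (exb t / eps <= 1 / eps) by (apply Rmult_le_compat_r; [left; apply Rinv_0_lt_compat|]; lra).
    assert (0 <= Kvm * CL1) by nra. nra. }
  assert (M * (Cp2 / eps) = (M * Cp2) / eps) by (field; lra).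
  pose proof (Hd1 (2 * M * A1) ltac:(nra)). pose proof (Hd1 (3 * M * A0) ltac:(nra)).
  replace ((4 * M * A1 + 3 * M * A0 + M * Cp2 + K3 + Kvm * CL1) / eps) with
    ((2 * M * A1) / eps + (3 * M * A0) / eps + (M * Cp2) / eps + (K3 + Kvm * CL1) / eps + (2 * M * A1) / eps) by (field; lra).
  lra.
Qed.

Lemma y3_bnd : forall x, 0 < x < 1 -> Rabs (y3 x) <= A3 * (eps + exb x / eps ^ 2).
Proof.
  destruct consts_pos as [Cp [Kp [L0 [L1 [L2 A0p]]]]]. assert (KF := K_facts).
  destruct consts_pos2 as [A1p [Cp2p A2p]]. destruct consts_pos3 as [Cp3p [A3p _]].
  apply (fc_thr y3 y4 (fun t => - b2 t * y1 t - 2 * b1 t * y2 t + c2 t * yf t + 2 * c1 t * y1 t + c t * y2 t - g2 t) A3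
    (3 * M * A1 + 3 * M * A2 + 3 * M * A0 + K4) (3 * M * A1 + 3 * M * A2 + Kvm * CL2) Cp3 2); try lra.
  - intros t Ht. apply dy3; auto.
  - intros t Ht. unfold y4. field. lra.
  - intros t Ht. pose proof (exs t ltac:(lra)) as [X01 [X12 [_ [X1 X0]]]].
    pose proof (Bb2 t ltac:(lra)). pose proof (Bb1 t ltac:(lra)). pose proof (Bc2 t ltac:(lra)).
    pose proof (Bc1 t ltac:(lra)). pose proof (Bc t ltac:(lra)).
    pose proof (y1_bnd t ltac:(lra)). pose proof (y2_bnd t Ht). pose proof (yf_bnd t ltac:(lra)). pose proof (g2_bnd t ltac:(lra)).
    rewrite pow_1 in H5.
    assert (Rabs (- b2 t) <= M) by (rewrite Rabs_Ropp; auto).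
    eapply Rle_trans; [bt|].
    assert (M * (A1 * (eps + exb t)) <= M * A1 * eps + M * A1 * (exb t / eps ^ 2)) by (assert (0 <= M * A1) by nra; nra).
    assert (2 * M * (A2 * (eps + exb t / eps)) <= 2 * M * A2 * eps + 2 * M * A2 * (exb t / eps ^ 2)) by (assert (0 <= M * A2) by nra; nra).
    assert (M * (A2 * (eps + exb t / eps)) <= M * A2 * eps + M * A2 * (exb t / eps ^ 2)) by (assert (0 <= M * A2) by nra; nra).
    assert (2 * M * (A1 * (eps + exb t)) <= 2 * M * A1 * eps + 2 * M * A1 * (exb t / eps ^ 2)) by (assert (0 <= M * A1) by nra; nra).
    assert (M * (3 * A0 * eps) = 3 * M * A0 * eps) by ring.
    lra.
  - intros t Ht. apply y3_pri; auto.
  - unfold A3. replace ((2 * Cp3 + (3 * M * A1 + 3 * M * A2 + 3 * M * A0 + K4) / beta + (3 * M * A1 + 3 * M * A2 + Kvm * CL2) / d + 1) * beta) with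
      (3 * M * A1 + 3 * M * A2 + 3 * M * A0 + K4 + (2 * Cp3 + (3 * M * A1 + 3 * M * A2 + Kvm * CL2) / d + 1) * beta) by (field; lra).
    assert (0 <= (3 * M * A1 + 3 * M * A2 + Kvm * CL2) / d) by (apply Rdiv_le_0_compat; nra).
    assert (0 <= (2 * Cp3 + (3 * M * A1 + 3 * M * A2 + Kvm * CL2) / d + 1) * beta) by (apply Rmult_le_pos; lra). lra.
  - unfold A3. replace ((2 * Cp3 + (3 * M * A1 + 3 * M * A2 + 3 * M * A0 + K4) / beta + (3 * M * A1 + 3 * M * A2 + Kvm * CL2) / d + 1) * d) with
      (3 * M * A1 + 3 * M * A2 + Kvm * CL2 + (2 * Cp3 + (3 * M * A1 + 3 * M * A2 + 3 * M * A0 + K4) / beta + 1) * d) by (field; lra).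
    assert (0 <= (3 * M * A1 + 3 * M * A2 + 3 * M * A0 + K4) / beta) by (apply Rdiv_le_0_compat; nra).
    assert (0 <= (2 * Cp3 + (3 * M * A1 + 3 * M * A2 + 3 * M * A0 + K4) / beta + 1) * d) by (apply Rmult_le_pos; lra). lra.
  - unfold A3. assert (0 <= (3 * M * A1 + 3 * M * A2 + 3 * M * A0 + K4) / beta) by (apply Rdiv_le_0_compat; nra).
    assert (0 <= (3 * M * A1 + 3 * M * A2 + Kvm * CL2) / d) by (apply Rdiv_le_0_compat; nra). lra.
Qed.

Lemma y4_bnd x : 0 < x < 1 -> Rabs (y4 x) <= A4 * (1 + exb x / eps ^ 3).
Proof.
  intros Ht. destruct consts_pos as [Cp [Kp [L0 [L1 [L2 A0p]]]]]. assert (KF := K_facts).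
  destruct consts_pos2 as [A1p [Cp2p A2p]]. destruct consts_pos3 as [Cp3p [A3p _]].
  pose proof (exs x ltac:(lra)) as [X01 [X12 [_ [X1 X0]]]].
  replace (A4 * (1 + exb x / eps ^ 3)) with (A4 * (eps + exb x / eps ^ 2) / eps) by (field; lra).
  unfold y4. apply abs_div_b; [lra|lra|].
  pose proof (Bb2 x ltac:(lra)). pose proof (Bb1 x ltac:(lra)). pose proof (Bc2 x ltac:(lra)).
  pose proof (Bc1 x ltac:(lra)). pose proof (Bc x ltac:(lra)). pose proof (Bb x ltac:(lra)).
  pose proof (y1_bnd x ltac:(lra)). pose proof (y2_bnd x Ht). pose proof (yf_bnd x ltac:(lra)). pose proof (g2_bnd x ltac:(lra)).
  pose proof (y3_bnd x Ht).
  rewrite pow_1 in H6.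
  assert (Rabs (- b2 x) <= M) by (rewrite Rabs_Ropp; auto).
  eapply Rle_trans; [bt|]. unfold A4.
  assert (M * (A1 * (eps + exb x)) <= M * A1 * eps + M * A1 * (exb x / eps ^ 2)) by (assert (0 <= M * A1) by nra; nra).
  assert (2 * M * (A2 * (eps + exb x / eps)) <= 2 * M * A2 * eps + 2 * M * A2 * (exb x / eps ^ 2)) by (assert (0 <= M * A2) by nra; nra).
  assert (M * (A2 * (eps + exb x / eps)) <= M * A2 * eps + M * A2 * (exb x / eps ^ 2)) by (assert (0 <= M * A2) by nra; nra).
  assert (2 * M * (A1 * (eps + exb x)) <= 2 * M * A1 * eps + 2 * M * A1 * (exb x / eps ^ 2)) by (assert (0 <= M * A1) by nra; nra).
  assert (M * (A3 * (eps + exb x / eps ^ 2)) = M * A3 * eps + M * A3 * (exb x / eps ^ 2)) by ring.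
  assert (M * (3 * A0 * eps) = 3 * M * A0 * eps) by ring.
  assert (0 < exb x / eps ^ 2) by lra.
  assert (0 <= M * A0 * (exb x / eps ^ 2)) by (apply Rmult_le_pos; [apply Rmult_le_pos|]; lra).
  assert (0 <= K4 * (exb x / eps ^ 2)) by (apply Rmult_le_pos; lra).
  assert (0 <= Kvm * CL2 * eps) by (apply Rmult_le_pos; [apply Rmult_le_pos|]; lra).
  lra.
Qed.

Lemma RB_fine t : 0 < t < 1 ->
  Rabs (y2 t) <= 2 * A2 / eps /\ Rabs (y3 t) <= 2 * A3 / eps ^ 2 /\ Rabs (y4 t) <= 2 * A4 / eps ^ 3.
Proof.
  intros Ht. pose proof (exs t ltac:(lra)) as [X01 [X12 [X23 [X1 X0]]]].
  destruct consts_pos2 as [A1p [Cp2p A2p]]. destruct consts_pos3 as [Cp3p [A3p A4p]].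
  pose proof (y2_bnd t Ht) as B2. pose proof (y3_bnd t Ht) as B3. pose proof (y4_bnd t Ht) as B4.
  rewrite pow_1 in B2.
  assert (ie : 1 <= / eps) by (rewrite <- Rinv_1; apply Rinv_le_contravar; lra).
  assert (e2 : 0 < eps ^ 2) by (apply pow_lt; lra). assert (e3 : 0 < eps ^ 3) by (apply pow_lt; lra).
  assert (eps <= 1 / eps) by (unfold Rdiv; nra).
  assert (eps <= 1 / eps ^ 2).
  { apply (Rmult_le_reg_l (eps ^ 2)); auto. replace (eps ^ 2 * (1 / eps ^ 2)) with 1 by (field; lra). simpl. nra. }
  assert (1 <= 1 / eps ^ 3).
  { apply (Rmult_le_reg_l (eps ^ 3)); auto. replace (eps ^ 3 * (1 / eps ^ 3)) with 1 by (field; lra).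
    simpl. assert (eps * eps <= 1) by nra. nra. }
  assert (exb t / eps <= 1 / eps) by (apply Rmult_le_compat_r; [left; apply Rinv_0_lt_compat|]; lra).
  assert (exb t / eps ^ 2 <= 1 / eps ^ 2) by (apply Rmult_le_compat_r; [left; apply Rinv_0_lt_compat|]; lra).
  assert (exb t / eps ^ 3 <= 1 / eps ^ 3) by (apply Rmult_le_compat_r; [left; apply Rinv_0_lt_compat|]; lra).
  repeat split.
  - replace (2 * A2 / eps) with (A2 * (1 / eps + 1 / eps)) by (field; lra). nra.
  - replace (2 * A3 / eps ^ 2) with (A3 * (1 / eps ^ 2 + 1 / eps ^ 2)) by (field; lra). nra.
  - replace (2 * A4 / eps ^ 3) with (A4 * (1 / eps ^ 3 + 1 / eps ^ 3)) by (field; lra). nra.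
Qed.

Lemma RB_coarse t : 0 < t < 1 -> exb t <= eps ^ 3 ->
  Rabs (y2 t) <= 2 * A2 * eps /\ Rabs (y3 t) <= 2 * A3 * eps /\ Rabs (y4 t) <= 2 * A4.
Proof.
  intros Ht Hex. destruct consts_pos2 as [A1p [Cp2p A2p]]. destruct consts_pos3 as [Cp3p [A3p A4p]].
  pose proof (y2_bnd t Ht) as B2. pose proof (y3_bnd t Ht) as B3. pose proof (y4_bnd t Ht) as B4.
  rewrite pow_1 in B2.
  assert (exb t / eps <= eps) by (apply (Rmult_le_reg_l eps); [lra|]; replace (eps * (exb t / eps)) with (exb t) by (field; lra); simpl in Hex; nra).
  assert (exb t / eps ^ 2 <= eps) by (apply (Rmult_le_reg_l (eps ^ 2)); [apply pow_lt; lra|]; replace (eps ^ 2 * (exb t / eps ^ 2)) with (exb t) by (field; lra); simpl in *; nra).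
  assert (exb t / eps ^ 3 <= 1) by (apply (Rmult_le_reg_l (eps ^ 3)); [apply pow_lt; lra|]; replace (eps ^ 3 * (exb t / eps ^ 3)) with (exb t) by (field; lra); lra).
  repeat split; nra.
Qed.

Definition Cy := 2 * M * M * A2 + A4 / 6 + M * A3 / 3 + 2 * A3.

Lemma Cy_pos : 0 <= Cy.
Proof.
  destruct consts_pos2 as [A1p [Cp2p A2p]]. destruct consts_pos3 as [Cp3p [A3p A4p]].
  unfold Cy. assert (0 <= M * M * A2) by (apply Rmult_le_pos; nra).
  assert (0 <= M * A3) by nra. lra.
Qed.

Lemma yf_facts : (forall t, Derive yf t = y1 t) /\ (forall t, Derive y1 t = y2 t) /\ (forall t, continuity_pt yf t).
Proof.
  split; [|split]; intros t.
  - apply is_derive_unique, dyf.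
  - apply is_derive_unique, dy1.
  - apply (is_derive_cont _ _ (y1 t)), dyf.
Qed.

Lemma sig_facts x hr : 0 <= x <= 1 -> 0 < hr ->
  let rho := b x * hr / (2 * eps) in
  0 < Defs.sigma rho <= 1 /\ Rabs (1 - Defs.sigma rho - rho) <= 4 * rho ^ 2 /\ eps * rho = b x * hr / 2 /\ 0 < rho
  /\ 4 * rho ^ 2 <= M * M * hr ^ 2 / eps ^ 2 /\ 0 < b x <= M.
Proof.
  intros Hx Hr rho. pose proof (bpos x Hx). pose proof (Bb x Hx) as BB. rewrite Rabs_pos_eq in BB by lra.
  assert (0 < rho) by (unfold rho; apply Rdiv_lt_0_compat; [apply Rmult_lt_0_compat|]; lra).
  split; [apply sigma_pos; auto|]. split; [apply sigma_2nd; auto|]. split; [unfold rho; field; lra|].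
  split; auto. split; [|lra].
  unfold rho. replace (4 * (b x * hr / (2 * eps)) ^ 2) with (b x * b x * hr ^ 2 / eps ^ 2) by (field; lra).
  apply Rmult_le_compat_r. left; apply Rinv_0_lt_compat, pow_lt; lra.
  apply Rmult_le_compat_r; [apply pow2_ge_0|]. nra.
Qed.

Lemma caseA x h : 0 < h -> 0 <= x - h -> x + h <= 1 ->
  Rabs (tloc eps (Defs.sigma (b x * h / (2 * eps))) (b x) yf y1 y2 x h h) <= Cy * (h / eps) ^ 2.
Proof.
  intros Hh H1 H2. destruct yf_facts as [F1 [F2 F3]].
  destruct (sig_facts x h ltac:(lra) Hh) as [S1 [S2 [S3 [S4 [S5 S6]]]]].
  destruct consts_pos2 as [A1p [Cp2p A2p]]. destruct consts_pos3 as [Cp3p [A3p A4p]].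
  assert (e2 : 0 < eps ^ 2) by (apply pow_lt; lra). assert (e3 : 0 < eps ^ 3) by (apply pow_lt; lra).
  eapply Rle_trans.
  { apply (loc_unif eps (Defs.sigma (b x * h / (2 * eps))) (b x) yf y1 y2 y3 y4 x h h ltac:(lra) ltac:(lra) ltac:(lra) Hh Hh
      ltac:(intros; apply dyf) ltac:(intros; apply dy1) (F3 _) (F3 _) (2 * A3 / eps ^ 2) (2 * A4 / eps ^ 3) (b x * h / (2 * eps))); auto.
    - intros z Hz. apply dy2. lra.
    - intros z Hz. apply dy3. lra.
    - intros z Hz. apply (RB_fine z ltac:(lra)).
    - intros z Hz. apply (RB_fine z ltac:(lra)). }
  pose proof (RB_fine x ltac:(lra)) as [R2 _].
  set (rho := b x * h / (2 * eps)) in *.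
  assert (T1 : eps * (4 * rho ^ 2) * Rabs (y2 x) <= 2 * M * M * A2 * (h / eps) ^ 2).
  { apply Rle_trans with (eps * (M * M * h ^ 2 / eps ^ 2) * (2 * A2 / eps)).
    - apply Rmult_le_compat; [apply Rmult_le_pos; [lra|apply Rmult_le_pos; [lra|apply pow2_ge_0]]|apply Rabs_pos| |auto].
      apply Rmult_le_compat_l; lra.
    - right. field. lra. }
  assert (T2 : eps * Defs.sigma rho * (2 * A4 / eps ^ 3 * h ^ 2 / 12) <= A4 / 6 * (h / eps) ^ 2).
  { assert (0 <= 2 * A4 / eps ^ 3 * h ^ 2 / 12) by (apply Rdiv_le_0_compat; [apply Rmult_le_pos; [apply Rdiv_le_0_compat|apply pow2_ge_0]|]; lra).
    apply Rle_trans with (eps * 1 * (2 * A4 / eps ^ 3 * h ^ 2 / 12)).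
    - apply Rmult_le_compat_r; auto. apply Rmult_le_compat_l; lra.
    - right. field. lra. }
  assert (T3 : b x * (2 * A3 / eps ^ 2 * h ^ 2 / 6) <= M * A3 / 3 * (h / eps) ^ 2).
  { assert (0 <= 2 * A3 / eps ^ 2 * h ^ 2 / 6) by (apply Rdiv_le_0_compat; [apply Rmult_le_pos; [apply Rdiv_le_0_compat|apply pow2_ge_0]|]; lra).
    apply Rle_trans with (M * (2 * A3 / eps ^ 2 * h ^ 2 / 6)).
    - apply Rmult_le_compat_r; lra.
    - right. field. lra. }
  unfold Cy. assert (0 <= 2 * A3 * (h / eps) ^ 2) by (apply Rmult_le_pos; [lra|apply pow2_ge_0]).
  lra.
Qed.

Lemma caseB x hl hr : 0 < hl -> 0 < hr -> 0 <= x - hl -> x + hr <= 1 ->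
  (forall z, x - hl < z < x + hr -> exb z <= eps ^ 3) ->
  Rabs (tloc eps (Defs.sigma (b x * hr / (2 * eps))) (b x) yf y1 y2 x hl hr) <= Cy * hr ^ 2 + 2 * A3 / 3 * eps ^ 2 * (hl + hr).
Proof.
  intros Hl Hr H1 H2 Hex. destruct yf_facts as [F1 [F2 F3]].
  destruct (sig_facts x hr ltac:(lra) Hr) as [S1 [S2 [S3 [S4 [S5 S6]]]]].
  destruct consts_pos2 as [A1p [Cp2p A2p]]. destruct consts_pos3 as [Cp3p [A3p A4p]].
  assert (e2 : 0 < eps ^ 2) by (apply pow_lt; lra).
  eapply Rle_trans.
  { apply (loc_ref eps (Defs.sigma (b x * hr / (2 * eps))) (b x) yf y1 y2 y3 x hl hr ltac:(lra) ltac:(lra) ltac:(lra) Hl Hr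
      ltac:(intros; apply dyf) ltac:(intros; apply dy1) (F3 _) (F3 _) (2 * A3 * eps) (b x * hr / (2 * eps))); auto.
    - intros z Hz. apply dy2. lra.
    - intros z Hz. apply (RB_coarse z ltac:(lra) (Hex z Hz)). }
  pose proof (RB_coarse x ltac:(lra) (Hex x ltac:(lra))) as [R2 _].
  set (rho := b x * hr / (2 * eps)) in *.
  assert (T1 : eps * (4 * rho ^ 2) * Rabs (y2 x) <= 2 * M * M * A2 * hr ^ 2).
  { apply Rle_trans with (eps * (M * M * hr ^ 2 / eps ^ 2) * (2 * A2 * eps)).
    - apply Rmult_le_compat; [apply Rmult_le_pos; [lra|apply Rmult_le_pos; [lra|apply pow2_ge_0]]|apply Rabs_pos| |auto].
      apply Rmult_le_compat_l; lra.
    - right. field. lra. }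
  assert (T2 : eps * Defs.sigma rho * (2 * A3 * eps / 3 * (hl + hr)) <= 2 * A3 / 3 * eps ^ 2 * (hl + hr)).
  { assert (0 <= 2 * A3 * eps / 3 * (hl + hr)) by (apply Rmult_le_pos; [apply Rdiv_le_0_compat; [apply Rmult_le_pos|]|]; lra).
    apply Rle_trans with (eps * 1 * (2 * A3 * eps / 3 * (hl + hr))).
    - apply Rmult_le_compat_r; auto. apply Rmult_le_compat_l; lra.
    - right. field. }
  assert (T3 : b x * (2 * A3 * eps * hr ^ 2 / 6) <= M * A3 / 3 * hr ^ 2).
  { assert (0 <= 2 * A3 * eps * hr ^ 2 / 6) by (apply Rdiv_le_0_compat; [apply Rmult_le_pos; [apply Rmult_le_pos|apply pow2_ge_0]|]; lra).
    apply Rle_trans with (M * (2 * A3 * eps * hr ^ 2 / 6)).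
    - apply Rmult_le_compat_r; lra.
    - assert (0 <= M * A3 * hr ^ 2) by (apply Rmult_le_pos; [nra|apply pow2_ge_0]).
      replace (M * (2 * A3 * eps * hr ^ 2 / 6)) with (M * A3 * hr ^ 2 * eps / 3) by field.
      replace (M * A3 / 3 * hr ^ 2) with (M * A3 * hr ^ 2 * 1 / 3) by field.
      apply Rmult_le_compat_r; [lra|]. apply Rmult_le_compat_l; lra. }
  unfold Cy. assert (0 <= A4 / 6 * hr ^ 2 + 2 * A3 * hr ^ 2) by (assert (0 <= hr ^ 2) by apply pow2_ge_0; nra).
  lra.
Qed.

Lemma caseCr x hl hr : 0 < hl -> 0 < hr -> 0 <= x - hl -> x + hr <= 1 ->
  (forall z, x - hl < z < x + hr -> exb z <= eps ^ 3) ->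
  Rabs (tloc eps (Defs.sigma (b x * hr / (2 * eps))) (b x) yf y1 y2 x hl hr) <= 4 * A2 * eps ^ 2 + M * A2 * hr * eps.
Proof.
  intros Hl Hr H1 H2 Hex. destruct yf_facts as [F1 [F2 F3]].
  destruct (sig_facts x hr ltac:(lra) Hr) as [S1 [S2 [S3 [S4 [S5 S6]]]]].
  destruct consts_pos2 as [A1p [Cp2p A2p]].
  eapply Rle_trans.
  { apply (loc_crude eps (Defs.sigma (b x * hr / (2 * eps))) (b x) yf y1 y2 x hl hr ltac:(lra) ltac:(lra) ltac:(lra) Hl Hr
      ltac:(intros; apply dyf) ltac:(intros; apply dy1) (F3 _) (F3 _) (2 * A2 * eps)).
    intros z Hz. apply (RB_coarse z ltac:(lra) (Hex z Hz)). }
  assert (b x * hr * (2 * A2 * eps) / 2 <= M * A2 * hr * eps).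
  { replace (b x * hr * (2 * A2 * eps) / 2) with (b x * (A2 * hr * eps)) by field.
    replace (M * A2 * hr * eps) with (M * (A2 * hr * eps)) by ring.
    apply Rmult_le_compat_r; [|lra]. apply Rmult_le_pos; [apply Rmult_le_pos|]; lra. }
  replace (2 * eps * (2 * A2 * eps)) with (4 * A2 * eps ^ 2) by ring. lra.
Qed.

Lemma caseC x H : 0 < H -> 0 <= x - H -> x + H <= 1 ->
  (forall z, x - H < z < x + H -> exb z <= eps ^ 3) ->
  Rabs (tloc eps (Defs.sigma (b x * H / (2 * eps))) (b x) yf y1 y2 x H H) <= Cy * H ^ 2.
Proof.
  intros Hh H1 H2 Hex. destruct yf_facts as [F1 [F2 F3]].
  destruct (sig_facts x H ltac:(lra) Hh) as [S1 [S2 [S3 [S4 [S5 S6]]]]].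
  destruct consts_pos2 as [A1p [Cp2p A2p]]. destruct consts_pos3 as [Cp3p [A3p A4p]].
  assert (e2 : 0 < eps ^ 2) by (apply pow_lt; lra).
  eapply Rle_trans.
  { apply (loc_unif eps (Defs.sigma (b x * H / (2 * eps))) (b x) yf y1 y2 y3 y4 x H H ltac:(lra) ltac:(lra) ltac:(lra) Hh Hh
      ltac:(intros; apply dyf) ltac:(intros; apply dy1) (F3 _) (F3 _) (2 * A3 * eps) (2 * A4) (b x * H / (2 * eps))); auto.
    - intros z Hz. apply dy2. lra.
    - intros z Hz. apply dy3. lra.
    - intros z Hz. apply (RB_coarse z ltac:(lra) (Hex z Hz)).
    - intros z Hz. apply (RB_coarse z ltac:(lra) (Hex z Hz)). }
  pose proof (RB_coarse x ltac:(lra) (Hex x ltac:(lra))) as [R2 _].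
  set (rho := b x * H / (2 * eps)) in *.
  assert (T1 : eps * (4 * rho ^ 2) * Rabs (y2 x) <= 2 * M * M * A2 * H ^ 2).
  { apply Rle_trans with (eps * (M * M * H ^ 2 / eps ^ 2) * (2 * A2 * eps)).
    - apply Rmult_le_compat; [apply Rmult_le_pos; [lra|apply Rmult_le_pos; [lra|apply pow2_ge_0]]|apply Rabs_pos| |auto].
      apply Rmult_le_compat_l; lra.
    - right. field. lra. }
  assert (T2 : eps * Defs.sigma rho * (2 * A4 * H ^ 2 / 12) <= A4 / 6 * H ^ 2).
  { assert (0 <= 2 * A4 * H ^ 2 / 12) by (apply Rdiv_le_0_compat; [apply Rmult_le_pos; [|apply pow2_ge_0]|]; lra).
    apply Rle_trans with (1 * 1 * (2 * A4 * H ^ 2 / 12)).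
    - apply Rmult_le_compat_r; auto. apply Rmult_le_compat; lra.
    - right. field. }
  assert (T3 : b x * (2 * A3 * eps * H ^ 2 / 6) <= M * A3 / 3 * H ^ 2).
  { assert (0 <= 2 * A3 * eps * H ^ 2 / 6) by (apply Rdiv_le_0_compat; [apply Rmult_le_pos; [apply Rmult_le_pos|apply pow2_ge_0]|]; lra).
    apply Rle_trans with (M * (2 * A3 * eps * H ^ 2 / 6)).
    - apply Rmult_le_compat_r; lra.
    - assert (0 <= M * A3 * H ^ 2) by (apply Rmult_le_pos; [nra|apply pow2_ge_0]).
      replace (M * (2 * A3 * eps * H ^ 2 / 6)) with (M * A3 * H ^ 2 * eps / 3) by field.
      replace (M * A3 / 3 * H ^ 2) with (M * A3 * H ^ 2 * 1 / 3) by field.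
      apply Rmult_le_compat_r; [lra|]. apply Rmult_le_compat_l; lra. }
  unfold Cy. assert (0 <= 2 * A3 * H ^ 2) by (assert (0 <= H ^ 2) by apply pow2_ge_0; nra).
  lra.
Qed.

Variables (a Q : R) (N J : nat).
Hypotheses (Ha : 3 < a) (HQ : 0 < Q < 1) (HJQ : INR J = Q * INR N) (HJa : a / (a - 3) <= INR J)
  (HJ1 : (1 <= J)%nat) (HJN : (J < N)%nat) (Hxi : xi_tr a eps beta (/ eps) <= Q).

Definition Iq := 1 / (1 - Q).
Definition Ca := Cy * (a / (beta * Q)) ^ 2.
Definition Cb := Cy * Iq ^ 2 + 2 * A3 / 3 * (1 + Iq) + 4 * A2 + M * A2 * Iq.
Definition Cfin := Ca + Cb.

Lemma Cb_pos : 0 < 1 - Q -> 0 <= Cb.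
Proof.
  intros HQ1. destruct consts_pos2 as [A1p [Cp2p A2p]]. destruct consts_pos3 as [Cp3p [A3p A4p]].
  assert (1 <= Iq).
  { unfold Iq. apply (Rmult_le_reg_l (1 - Q)); [lra|]. replace ((1 - Q) * (1 / (1 - Q))) with 1 by (field; lra). lra. }
  pose proof Cy_pos. assert (0 <= Iq ^ 2) by apply pow2_ge_0.
  assert (0 <= Cy * Iq ^ 2) by (apply Rmult_le_pos; lra).
  assert (0 <= 2 * A3 / 3 * (1 + Iq)) by (apply Rmult_le_pos; lra).
  assert (0 <= M * A2 * Iq) by (apply Rmult_le_pos; nra). unfold Cb. lra.
Qed.

Lemma exp_le_mono p q : p <= q -> exp p <= exp q.
Proof. intros. destruct (Req_dec p q) as [E|E]; [subst; lra|left; apply exp_increasing; lra]. Qed.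

Lemma final_bound i : (1 <= i <= N - 1)%nat ->
  Rabs (tau eps b (mesh (xi_tr a eps beta (/ eps)) N J) yf i) <=
  Cfin * (if (i <? J)%nat then (ln eps) ^ 2 * / (INR N) ^ 2
          else if (i =? J)%nat then Rmin eps (/ INR N) * / INR N + eps ^ 2 * / INR N
          else Rmin eps (/ INR N) * / INR N).
Proof.
  intros Hi.
  destruct yf_facts as [F1 [F2 F3]].
  destruct consts_pos2 as [A1p [Cp2p A2p]]. destruct consts_pos3 as [Cp3p [A3p A4p]].
  set (L := ln (/ eps)).
  assert (Lp : 0 < L).
  { unfold L. rewrite ln_Rinv by lra. assert (ln eps < 0) by (rewrite <- ln_1; apply ln_increasing; lra). lra. }
  assert (EL : (ln eps) ^ 2 = L ^ 2) by (unfold L; rewrite ln_Rinv by lra; ring).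
  set (xi := xi_tr a eps beta (/ eps)) in *.
  assert (Exi : xi = a * eps / beta * L) by reflexivity.
  assert (xip : 0 < xi) by (rewrite Exi; apply Rmult_lt_0_compat; [apply Rdiv_lt_0_compat; [apply Rmult_lt_0_compat|]|]; lra).
  assert (NJ : INR (N - J) = (1 - Q) * INR N) by (rewrite minus_INR by lia; lra).
  assert (Np : 0 < INR N) by (apply lt_0_INR; lia).
  assert (Jp : 0 < INR J) by (apply lt_0_INR; lia).
  assert (NJ1 : 1 <= INR (N - J)) by (replace 1 with (INR 1) by reflexivity; apply le_INR; lia).
  set (h := xi / INR J). set (H := (1 - xi) / INR (N - J)).
  assert (hp : 0 < h) by (apply Rdiv_lt_0_compat; lra).
  assert (Hp : 0 < H) by (apply Rdiv_lt_0_compat; lra).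
  assert (hN : h <= / INR N).
  { unfold h. rewrite HJQ. apply (Rmult_le_reg_l (Q * INR N)); [nra|].
    replace (Q * INR N * (xi / (Q * INR N))) with xi by (field; lra).
    replace (Q * INR N * / INR N) with Q by (field; lra). lra. }
  assert (HN : H <= Iq * / INR N).
  { unfold H, Iq. rewrite NJ. apply (Rmult_le_reg_l ((1 - Q) * INR N)); [nra|].
    replace ((1 - Q) * INR N * ((1 - xi) / ((1 - Q) * INR N))) with (1 - xi) by (field; lra).
    replace ((1 - Q) * INR N * (1 / (1 - Q) * / INR N)) with 1 by (field; lra). lra. }
  assert (Iqp : 1 <= Iq).
  { unfold Iq. apply (Rmult_le_reg_l (1 - Q)); [lra|]. replace ((1 - Q) * (1 / (1 - Q))) with 1 by (field; lra). lra. }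
  assert (Jh : INR J * h = xi) by (unfold h; field; lra).
  assert (NJH : INR (N - J) * H = 1 - xi) by (unfold H; field; lra).
  assert (exsm : forall z, xi - h <= z -> exb z <= eps ^ 3).
  { intros z Hz. unfold exb.
    assert (E3 : eps ^ 3 = exp (- (3 * L))).
    { unfold L. rewrite ln_Rinv by lra. replace (- (3 * - ln eps)) with (ln eps + (ln eps + ln eps)) by ring.
      rewrite !exp_plus, exp_ln by lra. ring. }
    rewrite E3. apply exp_le_mono.
    assert (beta * (xi - h) / eps <= beta * z / eps).
    { unfold Rdiv. apply Rmult_le_compat_r; [left; apply Rinv_0_lt_compat; lra|]. apply Rmult_le_compat_l; lra. }
    assert (Ebx : beta * (xi - h) / eps = a * L * (1 - 1 / INR J)).
    { unfold h. rewrite Exi. field. lra. }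
    assert (3 * L <= a * L * (1 - 1 / INR J)).
    { assert (3 <= a * (1 - 1 / INR J)).
      { assert (a / INR J <= a - 3).
        { apply (Rmult_le_reg_l (INR J)); auto. replace (INR J * (a / INR J)) with a by (field; lra).
          apply (Rmult_le_reg_r (/ (a - 3))). apply Rinv_0_lt_compat; lra.
          replace (INR J * (a - 3) * / (a - 3)) with (INR J) by (field; lra). unfold Rdiv in HJa. lra. }
        replace (a * (1 - 1 / INR J)) with (a - a / INR J) by (field; lra). lra. }
      nra. }
    replace (- beta * z / eps) with (- (beta * z / eps)) by (field; lra). lra. }
  set (xm := mesh xi N J).
  rewrite (tau_tloc eps b xm yf y1 y2 i ltac:(lia) F1 F2).
  destruct (Nat.ltb_spec i J) as [HiJ|HiJ].
  -
    assert (E1 : hs xm i = h) by (apply hs_lo; lia).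
    assert (E2 : hs xm (S i) = h) by (apply hs_lo; lia).
    assert (Ex : xm i = INR i * h) by (apply mesh_lo; lia).
    rewrite E1, E2, Ex.
    assert (I1 : 1 <= INR i) by (replace 1 with (INR 1) by reflexivity; apply le_INR; lia).
    assert (I2 : INR i + 1 <= INR J) by (rewrite <- S_INR; apply le_INR; lia).
    eapply Rle_trans; [apply caseA; auto; nra|].
    assert (Eh : (h / eps) ^ 2 = (a / (beta * Q)) ^ 2 * (L ^ 2 * / INR N ^ 2)).
    { unfold h. rewrite Exi, HJQ. field. repeat split; lra. }
    rewrite Eh, EL. unfold Cfin, Ca.
    assert (0 <= Cb * (L ^ 2 * / INR N ^ 2)).
    { unfold Cb. apply Rmult_le_pos; [|apply Rmult_le_pos; [apply pow2_ge_0|left; apply Rinv_0_lt_compat, pow_lt; lra]].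
      pose proof Cy_pos. assert (0 <= Iq ^ 2) by apply pow2_ge_0.
      assert (0 <= Cy * Iq ^ 2) by (apply Rmult_le_pos; lra).
      assert (0 <= 2 * A3 / 3 * (1 + Iq)) by (apply Rmult_le_pos; lra).
      assert (0 <= M * A2 * Iq) by (apply Rmult_le_pos; nra). lra. }
    lra.
  - assert (Cy0 := Cy_pos).
    assert (Ca0 : 0 <= Ca) by (unfold Ca; apply Rmult_le_pos; [auto|apply pow2_ge_0]).
    assert (iN : 0 < / INR N) by (apply Rinv_0_lt_compat; lra).
    assert (crude_fin : forall hr, 0 < hr -> hr <= Iq * / INR N -> eps <= / INR N ->
       4 * A2 * eps ^ 2 + M * A2 * hr * eps <= Cb * (eps * / INR N)).
    { intros hr Hr1 Hr2 He2. unfold Cb.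
      assert (eps ^ 2 <= eps * / INR N) by (simpl; nra).
      assert (M * A2 * hr * eps <= M * A2 * Iq * (eps * / INR N)).
      { replace (M * A2 * hr * eps) with (M * A2 * eps * hr) by ring.
        replace (M * A2 * Iq * (eps * / INR N)) with (M * A2 * eps * (Iq * / INR N)) by ring.
        apply Rmult_le_compat_l; [|auto]. apply Rmult_le_pos; [nra|lra]. }
      assert (0 <= Cy * Iq ^ 2 * (eps * / INR N)) by (apply Rmult_le_pos; [apply Rmult_le_pos; [auto|apply pow2_ge_0]|nra]).
      assert (0 <= 2 * A3 / 3 * (1 + Iq) * (eps * / INR N)) by (apply Rmult_le_pos; [|nra]; apply Rmult_le_pos; lra).
      nra. }
    destruct (Nat.eqb_spec i J) as [HeJ|HeJ].
    +
      subst i.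
      assert (E1 : hs xm J = h) by (apply hs_lo; lia).
      assert (E2 : hs xm (S J) = H) by (apply hs_hi; lia).
      assert (Ex : xm J = xi) by (unfold xm; rewrite mesh_lo by lia; auto).
      rewrite E1, E2, Ex.
      assert (xh : 0 <= xi - h).
      { assert (1 <= INR J) by (replace 1 with (INR 1) by reflexivity; apply le_INR; lia).
        rewrite <- Jh. nra. }
      assert (xH : xi + H <= 1) by nra.
      assert (Hex : forall z, xi - h < z < xi + H -> exb z <= eps ^ 3) by (intros z Hz; apply exsm; lra).
      destruct (Rle_dec eps (/ INR N)) as [Hs|Hs].
      * rewrite Rmin_left by lra.
        eapply Rle_trans; [apply caseCr; auto|].
        eapply Rle_trans; [apply crude_fin; auto|].
        unfold Cfin. assert (0 <= Ca * (eps * / INR N + eps ^ 2 * / INR N)) by (apply Rmult_le_pos; [auto|]; assert (0 <= eps ^ 2) by apply pow2_ge_0; nra).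
        assert (0 <= Cb * (eps ^ 2 * / INR N)) by (apply Rmult_le_pos; [apply Cb_pos; lra|assert (0 <= eps ^ 2) by apply pow2_ge_0; nra]).
        nra.
      * rewrite Rmin_right by lra.
        eapply Rle_trans; [apply caseB; auto|].
        assert (H2 : H ^ 2 <= Iq ^ 2 * (/ INR N * / INR N)) by (simpl; nra).
        assert (hH : h + H <= (1 + Iq) * / INR N) by nra.
        assert (T1 : Cy * H ^ 2 <= Cy * Iq ^ 2 * (/ INR N * / INR N)) by (rewrite Rmult_assoc; apply Rmult_le_compat_l; auto).
        assert (T2 : 2 * A3 / 3 * eps ^ 2 * (h + H) <= 2 * A3 / 3 * (1 + Iq) * (eps ^ 2 * / INR N)).
        { replace (2 * A3 / 3 * (1 + Iq) * (eps ^ 2 * / INR N)) with (2 * A3 / 3 * eps ^ 2 * ((1 + Iq) * / INR N)) by ring.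
          apply Rmult_le_compat_l; auto. apply Rmult_le_pos; [lra|apply pow2_ge_0]. }
        unfold Cfin, Cb.
        assert (0 <= Ca * (/ INR N * / INR N + eps ^ 2 * / INR N)) by (apply Rmult_le_pos; [auto|]; assert (0 <= eps ^ 2) by apply pow2_ge_0; nra).
        assert (0 <= eps ^ 2 * / INR N) by (assert (0 <= eps ^ 2) by apply pow2_ge_0; nra).
        assert (0 <= / INR N * / INR N) by nra.
        assert (0 <= Cy * Iq ^ 2) by (apply Rmult_le_pos; [auto|apply pow2_ge_0]).
        assert (0 <= 2 * A3 / 3 * (1 + Iq)) by (apply Rmult_le_pos; lra).
        assert (0 <= 4 * A2 + M * A2 * Iq) by (assert (0 <= M * A2 * Iq) by (apply Rmult_le_pos; [apply Rmult_le_pos|]; lra); lra).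
        set (X1 := / INR N * / INR N) in *. set (X2 := eps ^ 2 * / INR N) in *.
        assert (0 <= Cy * Iq ^ 2 * X2) by (apply Rmult_le_pos; auto).
        assert (0 <= 2 * A3 / 3 * (1 + Iq) * X1) by (apply Rmult_le_pos; auto).
        assert (0 <= (4 * A2 + M * A2 * Iq) * (X1 + X2)) by (apply Rmult_le_pos; lra).
        lra.
    +
      assert (HiJ' : (J + 1 <= i)%nat) by lia.
      assert (E1 : hs xm i = H) by (apply hs_hi; lia).
      assert (E2 : hs xm (S i) = H) by (apply hs_hi; lia).
      assert (Ex : xm i = xi + INR (i - J) * H) by (apply mesh_hi; lia).
      rewrite E1, E2, Ex.
      assert (I1 : 1 <= INR (i - J)) by (replace 1 with (INR 1) by reflexivity; apply le_INR; lia).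
      assert (I2 : INR (i - J) + 1 <= INR (N - J)) by (rewrite <- S_INR; apply le_INR; lia).
      assert (xh : 0 <= xi + INR (i - J) * H - H) by nra.
      assert (xH : xi + INR (i - J) * H + H <= 1) by nra.
      assert (Hex : forall z, xi + INR (i - J) * H - H < z < xi + INR (i - J) * H + H -> exb z <= eps ^ 3)
        by (intros z Hz; apply exsm; nra).
      destruct (Rle_dec eps (/ INR N)) as [Hs|Hs].
      * rewrite Rmin_left by lra.
        eapply Rle_trans; [apply caseCr; auto|].
        eapply Rle_trans; [apply crude_fin; auto|].
        unfold Cfin. assert (0 <= Ca * (eps * / INR N)) by (apply Rmult_le_pos; [auto|nra]). nra.
      * rewrite Rmin_right by lra.
        eapply Rle_trans; [apply caseC; auto|].
        assert (H2 : H ^ 2 <= Iq ^ 2 * (/ INR N * / INR N)) by (simpl; nra).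
        unfold Cfin, Cb.
        assert (0 <= / INR N * / INR N) by nra.
        assert (0 <= Ca * (/ INR N * / INR N)) by (apply Rmult_le_pos; auto).
        assert (Cy * H ^ 2 <= Cy * Iq ^ 2 * (/ INR N * / INR N)) by (rewrite Rmult_assoc; apply Rmult_le_compat_l; auto).
        assert (0 <= M * A2 * Iq) by (apply Rmult_le_pos; [apply Rmult_le_pos|]; lra).
        assert (0 <= 2 * A3 / 3 * (1 + Iq)) by (apply Rmult_le_pos; lra).
        assert (0 <= (2 * A3 / 3 * (1 + Iq) + 4 * A2 + M * A2 * Iq) * (/ INR N * / INR N)) by (apply Rmult_le_pos; [lra|auto]).
        lra.
Qed.

End U0.

Theorem lemma4 :
  forall (b c f : R -> R) (beta Q a : R),
    CkR 4 b -> CkR 4 c -> CkR 4 f ->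
    0 < beta -> (forall x, 0 <= x <= 1 -> b x > beta) ->
    (forall x, 0 <= x <= 1 -> 0 <= c x) ->
    0 < Q < 1 -> 3 < a ->
  exists (N0 : nat) (C : R),
    forall (eps : R) (N J : nat) (u u0 : R -> R),
      0 < eps < 1 ->
      (N0 <= N)%nat ->
      INR J = Q * INR N ->
      xi_tr a eps beta (/ eps) <= Q ->
      (forall x, ex_derive u x) -> (forall x, ex_derive (Derive u) x) ->
      (forall x, 0 < x < 1 ->
         - eps * Derive_n u 2 x - b x * Derive u x + c x * u x = f x) ->
      u 0 = 0 -> u 1 = 0 ->
      (forall x, ex_derive u0 x) -> (forall x, ex_derive (Derive u0) x) ->
      (forall x, 0 < x < 1 -> - b x * Derive u0 x + c x * u0 x = f x) ->
      u0 1 = 0 ->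
      let v := fun x => - (eps * Derive u 0 / b 0) * exp (- b 0 * x / eps) in
      let y := fun x => u x - u0 x - v x in
      let x := mesh (xi_tr a eps beta (/ eps)) N J in
      forall i : nat, (1 <= i <= N - 1)%nat ->
        Rabs (tau eps b x y i) <=
        C * (if (i <? J)%nat then (ln eps) ^ 2 * / (INR N) ^ 2
             else if (i =? J)%nat then
               Rmin eps (/ INR N) * / INR N + eps ^ 2 * / INR N
             else Rmin eps (/ INR N) * / INR N).
Proof.
  intros b c f beta Q a Hb Hc Hf Hbeta Hbpos Hcpos HQ Ha.
  destruct (Ck_min b beta Hb Hbpos) as [d [Hd Hbmin]].
  destruct (Ck_bound b Hb) as [Mb [Mbp HMb]].
  destruct (Ck_bound c Hc) as [Mc [Mcp HMc]].
  destruct (Ck_bound f Hf) as [Mf [Mfp HMf]].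
  set (M := Mb + Mc + Mf + beta + 1).
  assert (BM : forall g Mg j x, (j <= 3)%nat -> 0 <= x <= 1 ->
     (forall j x, (j <= 3)%nat -> 0 <= x <= 1 -> Rabs (Derive_n g j x) <= Mg) -> Mg <= M ->
     Rabs (Derive_n g j x) <= M).
  { intros g Mg j x Hj Hx H HM. eapply Rle_trans; [apply H; auto|auto]. }
  assert (LMb : Mb <= M) by (unfold M; lra).
  assert (LMc : Mc <= M) by (unfold M; lra).
  assert (LMf : Mf <= M) by (unfold M; lra).
  set (X := (a / (a - 3) + 1) / Q).
  destruct (INR_archimed 1 X ltac:(lra)) as [N0 HN0].
  exists N0, (Cfin beta d M a Q).
  intros eps N J u u0 He HN HJQ Hxi Hud Hudd Hode Hu0 Hu1 Hu0d Hu0dd Hode0 Hu01 v y x i Hi.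
  assert (INX : X < INR N).
  { apply Rlt_le_trans with (INR N0); [lra|apply le_INR; auto]. }
  assert (Hq : a / (a - 3) + 1 <= INR J).
  { rewrite HJQ. apply (Rmult_le_reg_r (/ Q)). apply Rinv_0_lt_compat; lra.
    replace (Q * INR N * / Q) with (INR N) by (field; lra). unfold X in INX. unfold Rdiv in INX. lra. }
  assert (aa : 0 <= a / (a - 3)) by (apply Rdiv_le_0_compat; lra).
  assert (HJ1 : (1 <= J)%nat) by (apply INR_le; simpl; lra).
  assert (Np : 0 < INR N) by nra.
  assert (HJN : (J < N)%nat) by (apply INR_lt; rewrite HJQ; nra).
  exact (final_bound b (Derive_n b 1) (Derive_n b 2) (Derive_n b 3) c (Derive_n c 1) (Derive_n c 2) (Derive_n c 3)
    f (Derive_n f 1) (Derive_n f 2) (Derive_n f 3) beta d M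
    (fun x => Ck_der0 b x Hb) (fun x => Ck_der b 1 x Hb ltac:(lia)) (fun x => Ck_der b 2 x Hb ltac:(lia))
    (fun x => Ck_der0 c x Hc) (fun x => Ck_der c 1 x Hc ltac:(lia)) (fun x => Ck_der c 2 x Hc ltac:(lia))
    (fun x => Ck_der0 f x Hf) (fun x => Ck_der f 1 x Hf ltac:(lia)) (fun x => Ck_der f 2 x Hf ltac:(lia))
    Hbeta Hd ltac:(unfold M; lra) ltac:(unfold M; lra) Hbmin Hcpos
    (fun x Hx => BM b Mb 0%nat x ltac:(lia) Hx HMb LMb)
    (fun x Hx => BM b Mb 1%nat x ltac:(lia) Hx HMb LMb)
    (fun x Hx => BM b Mb 2%nat x ltac:(lia) Hx HMb LMb)
    (fun x Hx => BM b Mb 3%nat x ltac:(lia) Hx HMb LMb)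
    (fun x Hx => BM c Mc 0%nat x ltac:(lia) Hx HMc LMc)
    (fun x Hx => BM c Mc 1%nat x ltac:(lia) Hx HMc LMc)
    (fun x Hx => BM c Mc 2%nat x ltac:(lia) Hx HMc LMc)
    (fun x Hx => BM c Mc 3%nat x ltac:(lia) Hx HMc LMc)
    (fun x Hx => BM f Mf 0%nat x ltac:(lia) Hx HMf LMf)
    (fun x Hx => BM f Mf 1%nat x ltac:(lia) Hx HMf LMf)
    (fun x Hx => BM f Mf 2%nat x ltac:(lia) Hx HMf LMf)
    (fun x Hx => BM f Mf 3%nat x ltac:(lia) Hx HMf LMf)
    u0 Hu0d Hode0 Hu01 Hu0dd eps u He Hud Hudd Hode Hu0 Hu1 a Q N J Ha HQ HJQ ltac:(lra) HJ1 HJN Hxi i Hi).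
Qed.
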